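(* Let $(\underline{\mathbf{v}},\underline{\boldsymbol{\rho}})$ be a subsolution and $(\overline{\mathbf{v}},\overline{\boldsymbol{\rho}})$ a supersolution of the system described in the context, both locally bounded in time, and assume that for all $j\in\mathbb{Z}$, $\underline{v}_j(0,x)\le\overline{v}_j(0,x)$ for all $x\in[0,1]$ and $\underline{\rho}_j(0)\le\overline{\rho}_j(0)$. Then $\underline{v}_j(t,x)\le\overline{v}_j(t,x)$ and $\underline{\rho}_j(t)\le\overline{\rho}_j(t)$ for all $t>0$, $x\in[0,1]$, $j\in\mathbb{Z}$. If furthermore $\underline{\mathbf{v}}(0)\not\equiv\overline{\mathbf{v}}(0)$ or $\underline{\boldsymbol{\rho}}(0)\not\equiv\overline{\boldsymbol{\rho}}(0)$, then $\underline{v}_j(t,x)<\overline{v}_j(t,x)$ and $\underline{\rho}_j(t)<\overline{\rho}_j(t)$ for all $t>0$, $x\in[0,1]$, $j\in\mathbb{Z}$.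
   Context: Fix $\alpha,\beta,d>0$ and $f\in\mathscr{C}^1([0,1])$ with $f(0)=f(1)=0$, $0<f(u)\le f'(0)u$ on $(0,1)$, extended to a locally Lipschitz function on $\mathbb{R}$ negative on $\mathbb{R}\setminus[0,1]$. A pair $(\mathbf{v},\boldsymbol{\rho})=(v_j,\rho_j)_{j\in\mathbb{Z}}$ is in the regularity class if for every $j$: $\rho_j\in\mathscr{C}^1([0,+\infty))$, $v_j\in\mathscr{C}^0([0,+\infty)\times[0,1])$, $\partial_tv_j,\partial_x^2v_j\in\mathscr{C}^0((0,+\infty)\times(0,1))$, $\partial_xv_j\in\mathscr{C}^0((0,+\infty)\times[0,1])$. Such a pair $(\overline{\mathbf{v}},\overline{\boldsymbol{\rho}})$ is a supersolution if for all $t>0$, $j\in\mathbb{Z}$: $\partial_t\overline{v}_j\ge d\,\partial_x^2\overline{v}_j$ on $(0,1)$; $\overline{\rho}_j'(t)\ge f(\overline{\rho}_j(t))+\alpha(\overline{v}_j(t,0)+\overline{v}_{j-1}(t,1))-2\beta\overline{\rho}_j(t)$; $-d\,\partial_x\overline{v}_j(t,0)+\alpha\overline{v}_j(t,0)\ge\beta\overline{\rho}_j(t)$; $d\,\partial_x\overline{v}_j(t,1)+\alpha\overline{v}_j(t,1)\ge\beta\overline{\rho}_{j+1}(t)$. A subsolution is defined in the same way with all these inequalities reversed. Locally bounded in time means that for every $T>0$, $\sup_{t\in[0,T],\,j\in\mathbb{Z},\,x\in[0,1]}(|v_j(t,x)|+|\rho_j(t)|)<\infty$. *)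

(* Defs.v *)
From Stdlib Require Import Reals ZArith.
From Coquelicot Require Import Coquelicot.
Open Scope R_scope.

Definition deriv_within (D : R -> Prop) (f : R -> R) (x l : R) : Prop :=
  filterlim (fun y => (f y - f x) / (y - x))
    (within (fun y => D y /\ y <> x) (locally x)) (locally l).

Definition cont_on (D : R -> Prop) (g : R -> R) : Prop :=
  forall t, D t -> forall eps, 0 < eps -> exists delta, 0 < delta /\
    forall s, D s -> Rabs (s - t) < delta -> Rabs (g s - g t) < eps.

Definition cont2_on (D : R -> R -> Prop) (g : R -> R -> R) : Prop :=
  forall t x, D t x -> forall eps, 0 < eps -> exists delta, 0 < delta /\
    forall s y, D s y -> Rabs (s - t) < delta -> Rabs (y - x) < delta ->
      Rabs (g s y - g t x) < eps.

Definition KPP_f (f : R -> R) : Prop :=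
  (exists df : R -> R,
     (forall u, 0 <= u <= 1 -> deriv_within (fun y => 0 <= y <= 1) f u (df u)) /\
     cont_on (fun y => 0 <= y <= 1) df /\
     (forall u, 0 < u < 1 -> 0 < f u /\ f u <= df 0 * u)) /\
  f 0 = 0 /\ f 1 = 0 /\
  (forall a b, exists L, forall x y, a <= x <= b -> a <= y <= b ->
     Rabs (f x - f y) <= L * Rabs (x - y)) /\
  (forall u, u < 0 \/ 1 < u -> f u < 0).

(* Regularity class, with the derivatives given as witness functions
   drho = rho_j', vt = d_t v_j, vx = d_x v_j, vxx = d_x^2 v_j. *)
Definition regular (v : Z -> R -> R -> R) (rho : Z -> R -> R)
  (drho : Z -> R -> R) (vt vx vxx : Z -> R -> R -> R) : Prop :=
  forall j : Z,
    (forall t, 0 <= t -> deriv_within (fun s => 0 <= s) (rho j) t (drho j t)) /\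
    cont_on (fun s => 0 <= s) (drho j) /\
    cont2_on (fun t x => 0 <= t /\ 0 <= x <= 1) (v j) /\
    (forall t x, 0 < t -> 0 < x < 1 -> is_derive (fun s => v j s x) t (vt j t x)) /\
    (forall t x, 0 < t -> 0 <= x <= 1 ->
       deriv_within (fun y => 0 <= y <= 1) (fun y => v j t y) x (vx j t x)) /\
    (forall t x, 0 < t -> 0 < x < 1 -> is_derive (fun y => vx j t y) x (vxx j t x)) /\
    cont2_on (fun t x => 0 < t /\ 0 < x < 1) (vt j) /\
    cont2_on (fun t x => 0 < t /\ 0 < x < 1) (vxx j) /\
    cont2_on (fun t x => 0 < t /\ 0 <= x <= 1) (vx j).

Definition supersolution (alpha beta d : R) (f : R -> R)
  (v : Z -> R -> R -> R) (rho : Z -> R -> R) : Prop :=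
  exists (drho : Z -> R -> R) (vt vx vxx : Z -> R -> R -> R),
    regular v rho drho vt vx vxx /\
    forall (t : R) (j : Z), 0 < t ->
      (forall x, 0 < x < 1 -> vt j t x >= d * vxx j t x) /\
      drho j t >= f (rho j t) + alpha * (v j t 0 + v (j - 1)%Z t 1) - 2 * beta * rho j t /\
      - d * vx j t 0 + alpha * v j t 0 >= beta * rho j t /\
      d * vx j t 1 + alpha * v j t 1 >= beta * rho (j + 1)%Z t.

Definition subsolution (alpha beta d : R) (f : R -> R)
  (v : Z -> R -> R -> R) (rho : Z -> R -> R) : Prop :=
  exists (drho : Z -> R -> R) (vt vx vxx : Z -> R -> R -> R),
    regular v rho drho vt vx vxx /\
    forall (t : R) (j : Z), 0 < t ->
      (forall x, 0 < x < 1 -> vt j t x <= d * vxx j t x) /\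
      drho j t <= f (rho j t) + alpha * (v j t 0 + v (j - 1)%Z t 1) - 2 * beta * rho j t /\
      - d * vx j t 0 + alpha * v j t 0 <= beta * rho j t /\
      d * vx j t 1 + alpha * v j t 1 <= beta * rho (j + 1)%Z t.

Definition locally_bounded_in_time (v : Z -> R -> R -> R) (rho : Z -> R -> R) : Prop :=
  forall T, 0 < T -> exists M, forall t j x, 0 <= t <= T -> 0 <= x <= 1 ->
    Rabs (v j t x) + Rabs (rho j t) <= M.

(* Main.v *)
Require Import Defs.
From Stdlib Require Import Reals ZArith Lra Lia Psatz Classical.
From Coquelicot Require Import Coquelicot.
Open Scope R_scope.

Lemma ball_R x e y : ball x e y <-> Rabs (y - x) < e.
Proof. unfold ball; simpl; unfold AbsRing_ball, abs, minus, plus, opp; simpl. tauto. Qed.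

Definition DW (D : R -> Prop) (g : R -> R) (x l : R) : Prop :=
  forall eps, 0 < eps -> exists del, 0 < del /\ forall y, D y -> y <> x -> Rabs (y - x) < del ->
    Rabs ((g y - g x) / (y - x) - l) < eps.

Lemma dw_of_within D g x l : deriv_within D g x l -> DW D g x l.
Proof.
  intros H eps Heps.
  assert (Hl : locally l (fun z => Rabs (z - l) < eps)).
  { exists (mkposreal eps Heps). intros z Hz. apply ball_R in Hz. exact Hz. }
  specialize (H _ Hl). destruct H as [e He]. exists e. split. apply cond_pos.
  intros y Dy Ny Hy. apply (He y). apply ball_R. exact Hy. split; auto.
Qed.

Lemma dw_of_derive D g x l : is_derive g x l -> DW D g x l.
Proof.
  intros H. apply is_derive_Reals in H. intros eps Heps.
  destruct (H eps Heps) as [del Hd]. exists del. split. apply cond_pos.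
  intros y Dy Ny Hy. specialize (Hd (y - x)). replace (x + (y - x)) with y in Hd by ring.
  apply Hd. lra. exact Hy.
Qed.

Lemma derive_of_dw D g x l r : 0 < r -> (forall y, Rabs (y - x) < r -> D y) -> DW D g x l -> is_derive g x l.
Proof.
  intros Hr HD H. apply is_derive_Reals. intros eps Heps.
  destruct (H eps Heps) as [del [Hdel Hd]].
  exists (mkposreal (Rmin del r) (Rmin_pos _ _ Hdel Hr)). simpl. intros h Hh Hhl.
  assert (Hm1 := Rmin_l del r). assert (Hm2 := Rmin_r del r).
  specialize (Hd (x + h)). replace (x + h - x) with h in Hd by ring. apply Hd.
  apply HD. replace (x + h - x) with h by ring. lra. lra. lra.
Qed.

Lemma dw_plus D f g x l1 l2 : DW D f x l1 -> DW D g x l2 -> DW D (fun y => f y + g y) x (l1 + l2).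
Proof.
  intros H1 H2 eps Heps.
  destruct (H1 (eps/2)) as [d1 [Hd1 K1]]; [lra|].
  destruct (H2 (eps/2)) as [d2 [Hd2 K2]]; [lra|].
  exists (Rmin d1 d2). split. apply Rmin_pos; auto.
  intros y Dy Ny Hy. assert (Hm1 := Rmin_l d1 d2). assert (Hm2 := Rmin_r d1 d2).
  specialize (K1 y Dy Ny ltac:(lra)). specialize (K2 y Dy Ny ltac:(lra)).
  replace ((f y + g y - (f x + g x)) / (y - x) - (l1 + l2)) with
    (((f y - f x) / (y - x) - l1) + ((g y - g x) / (y - x) - l2)).
  2:{ field. intro. apply Ny. lra. }
  eapply Rle_lt_trans. apply Rabs_triang. lra.
Qed.

Lemma dw_opp D f x l : DW D f x l -> DW D (fun y => - f y) x (- l).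
Proof.
  intros H eps Heps. destruct (H eps Heps) as [d1 [Hd1 K1]]. exists d1. split; auto.
  intros y Dy Ny Hy. specialize (K1 y Dy Ny Hy).
  replace ((- f y - - f x) / (y - x) - - l) with (- ((f y - f x) / (y - x) - l)).
  2:{ field. intro. apply Ny. lra. }
  rewrite Rabs_Ropp. auto.
Qed.

Lemma dw_minus D f g x l1 l2 : DW D f x l1 -> DW D g x l2 -> DW D (fun y => f y - g y) x (l1 - l2).
Proof. intros H1 H2. apply (dw_plus D f (fun y => - g y) x l1 (- l2) H1 (dw_opp _ _ _ _ H2)). Qed.

Lemma dw_ext D f g x l : (forall y, f y = g y) -> DW D f x l -> DW D g x l.
Proof. intros E H eps Heps. destruct (H eps Heps) as [d1 [Hd1 K1]]. exists d1. split; auto.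
  intros y Dy Ny Hy. rewrite <- !E. auto. Qed.

Lemma dw_ge D g x l c : DW D g x l ->
  (forall eta, 0 < eta -> exists y, D y /\ y <> x /\ Rabs (y - x) < eta /\ c <= (g y - g x) / (y - x)) ->
  c <= l.
Proof.
  intros H P. destruct (Rle_lt_dec c l) as [h|h]; auto.
  destruct (H (c - l)) as [del [Hdel K]]; [lra|].
  destruct (P del Hdel) as [y [Dy [Ny [Hy Hc]]]]. specialize (K y Dy Ny Hy).
  apply Rabs_def2 in K. lra.
Qed.

Lemma dw_le D g x l c : DW D g x l ->
  (forall eta, 0 < eta -> exists y, D y /\ y <> x /\ Rabs (y - x) < eta /\ (g y - g x) / (y - x) <= c) ->
  l <= c.
Proof.
  intros H P. destruct (Rle_lt_dec l c) as [h|h]; auto.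
  destruct (H (l - c)) as [del [Hdel K]]; [lra|].
  destruct (P del Hdel) as [y [Dy [Ny [Hy Hc]]]]. specialize (K y Dy Ny Hy).
  apply Rabs_def2 in K. lra.
Qed.

Lemma quot_ge N h c : 0 < h -> c * h <= N -> c <= N / h.
Proof. intros Hh H. set (q := N / h). assert (N = q * h) by (unfold q; field; lra). nra. Qed.
Lemma quot_le N h c : 0 < h -> N <= c * h -> N / h <= c.
Proof. intros Hh H. set (q := N / h). assert (N = q * h) by (unfold q; field; lra). nra. Qed.
Lemma quot_ge_neg N h c : h < 0 -> N <= c * h -> c <= N / h.
Proof. intros Hh H. set (q := N / h). assert (N = q * h) by (unfold q; field; lra). nra. Qed.
Lemma quot_le_neg N h c : h < 0 -> c * h <= N -> N / h <= c.
Proof. intros Hh H. set (q := N / h). assert (N = q * h) by (unfold q; field; lra). nra. Qed.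

Lemma dw_cont D g x l : DW D g x l -> forall eps, 0 < eps -> exists del, 0 < del /\
  forall y, D y -> Rabs (y - x) < del -> Rabs (g y - g x) < eps.
Proof.
  intros H eps Heps. destruct (H 1) as [d1 [Hd1 K]]; [lra|].
  assert (HL : 0 < Rabs l + 1) by (pose proof (Rabs_pos l); lra).
  exists (Rmin d1 (eps / (Rabs l + 1))). split. apply Rmin_pos; auto. apply Rdiv_lt_0_compat; auto.
  intros y Dy Hy. assert (Hm1 := Rmin_l d1 (eps / (Rabs l + 1))). assert (Hm2 := Rmin_r d1 (eps / (Rabs l + 1))).
  destruct (Req_dec y x) as [E|Ny]. subst. replace (g x - g x) with 0 by ring. rewrite Rabs_R0. auto.
  specialize (K y Dy Ny ltac:(lra)).
  set (q := (g y - g x) / (y - x)) in *.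
  assert (E : g y - g x = q * (y - x)) by (unfold q; field; intro; apply Ny; lra).
  rewrite E, Rabs_mult.
  assert (Rabs q < Rabs l + 1). { pose proof (Rabs_triang_inv q l). lra. }
  assert (Rabs (y - x) < eps / (Rabs l + 1)) by lra.
  assert (Rabs (y - x) * (Rabs l + 1) < eps).
  { apply Rmult_lt_reg_r with (/ (Rabs l + 1)). apply Rinv_0_lt_compat; auto.
    replace (Rabs (y - x) * (Rabs l + 1) * / (Rabs l + 1)) with (Rabs (y - x)) by (field; lra). exact H1. }
  pose proof (Rabs_pos (y - x)). pose proof (Rabs_pos q). nra.
Qed.

Lemma lub_approx E m : is_lub E m -> forall eta, 0 < eta -> exists y, E y /\ m - eta < y.
Proof.
  intros [H1 H2] eta He. apply NNPP. intro N.
  assert (is_upper_bound E (m - eta)).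
  { intros y Ey. destruct (Rle_lt_dec y (m - eta)); auto. exfalso; apply N; exists y; auto. }
  specialize (H2 _ H). lra.
Qed.

Lemma real_induction (P : R -> Prop) t1 T : t1 <= T -> P t1 ->
  (forall t, t1 <= t < T -> (forall s, t1 <= s <= t -> P s) ->
     exists del, 0 < del /\ forall s, t <= s < t + del -> s <= T -> P s) ->
  (forall t, t1 < t <= T -> (forall s, t1 <= s < t -> P s) -> P t) ->
  forall t, t1 <= t <= T -> P t.
Proof.
  intros HT H0 Hp Hc.
  set (E := fun s => t1 <= s <= T /\ forall u, t1 <= u <= s -> P u).
  assert (Hb : bound E). { exists T. intros s [Hs _]. lra. }
  assert (He : exists x, E x). { exists t1. split. lra. intros u Hu. replace u with t1 by lra. auto. }
  destruct (completeness E Hb He) as [m Hm].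
  assert (Hm1 : t1 <= m). { apply Hm. split. lra. intros u Hu. replace u with t1 by lra. auto. }
  assert (Hm2 : m <= T). { apply Hm. intros s [Hs _]. lra. }
  assert (Hlt : forall u, t1 <= u < m -> P u).
  { intros u Hu. destruct (lub_approx E m Hm (m - u)) as [y [[Hy1 Hy2] Hy3]]. lra.
    apply Hy2. lra. }
  assert (Hall : forall u, t1 <= u <= m -> P u).
  { intros u Hu. destruct (Req_dec u m). subst u.
    destruct (Req_dec m t1). rewrite H; auto. apply Hc. lra. intros. apply Hlt. lra.
    apply Hlt. lra. }
  destruct (Req_dec m T) as [EmT|NmT].
  - intros t Ht. apply Hall. lra.
  - destruct (Hp m ltac:(lra) Hall) as [del [Hdel Hd]].
    set (s' := Rmin (m + del / 2) T).
    assert (Hs1 : s' <= m + del / 2) by apply Rmin_l. assert (Hs2 : s' <= T) by apply Rmin_r.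
    assert (Hs3 : s' = m + del / 2 \/ s' = T). { unfold s', Rmin. destruct Rle_dec; auto. }
    assert (E s').
    { split. destruct Hs3; split; lra. intros u Hu. destruct (Rle_lt_dec u m). apply Hall; lra.
      apply Hd; lra. }
    assert (s' <= m) by (apply Hm; auto).
    destruct Hs3; lra.
Qed.

Lemma persist (g : R -> R -> R) t0 tmax a b : a <= b ->
  (forall x, a <= x <= b -> 0 < g t0 x) ->
  (forall x, a <= x <= b -> forall eps, 0 < eps -> exists eta, 0 < eta /\
     forall s y, t0 <= s <= tmax -> s < t0 + eta -> a <= y <= b -> Rabs (y - x) < eta ->
       Rabs (g s y - g t0 x) < eps) ->
  exists del, 0 < del /\ forall s y, t0 <= s <= tmax -> s < t0 + del -> a <= y <= b -> 0 < g s y.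
Proof.
  intros Hab Hpos Hc.
  set (A := fun y => a <= y <= b /\ exists del, 0 < del /\ forall s z, t0 <= s <= tmax -> s < t0 + del -> a <= z <= y -> 0 < g s z).
  assert (Hb : bound A). { exists b. intros y [H _]. lra. }
  assert (He : exists x, A x).
  { exists a. split. lra. destruct (Hc a ltac:(lra) (g t0 a / 2)) as [eta [Heta K]].
    specialize (Hpos a ltac:(lra)). lra.
    exists eta. split; auto. intros s z Hs Hs2 Hz. replace z with a by lra.
    specialize (K s a Hs Hs2 ltac:(lra) ltac:(rewrite Rminus_eq_0, Rabs_R0; lra)).
    specialize (Hpos a ltac:(lra)). apply Rabs_def2 in K. lra. }
  destruct (completeness A Hb He) as [m Hm].
  assert (Hm1 : a <= m). { destruct He as [y Hy]. pose proof (proj1 Hm y Hy). destruct Hy. lra. }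
  assert (Hm2 : m <= b). { apply Hm. intros y [H _]. lra. }
  specialize (Hpos m ltac:(lra)) as Pm.
  destruct (Hc m ltac:(lra) (g t0 m / 2) ltac:(lra)) as [eta [Heta K]].
  destruct (lub_approx A m Hm eta Heta) as [y [[Hy1 [dy [Hdy Ky]]] Hy2]].
  assert (Hym : y <= m) by (apply Hm; split; auto; exists dy; auto).
  set (y' := Rmin b (m + eta / 2)).
  assert (H1 : y' <= b) by apply Rmin_l. assert (H2 : y' <= m + eta / 2) by apply Rmin_r.
  assert (H3 : y' = b \/ y' = m + eta / 2) by (unfold y', Rmin; destruct Rle_dec; auto).
  assert (Hgood : forall s z, t0 <= s <= tmax -> s < t0 + Rmin dy eta -> a <= z <= y' -> 0 < g s z).
  { intros s z Hs Hs2 Hz. assert (Hm3 := Rmin_l dy eta). assert (Hm4 := Rmin_r dy eta).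
    destruct (Rle_lt_dec z y). apply Ky; auto; lra.
    assert (Rabs (z - m) < eta). { apply Rabs_def1; lra. }
    specialize (K s z Hs ltac:(lra) ltac:(lra) H). apply Rabs_def2 in K. lra. }
  assert (HA : A y'). { split. destruct H3; lra. exists (Rmin dy eta). split. apply Rmin_pos; auto. auto. }
  assert (y' <= m) by (apply Hm; auto).
  assert (Hy'b : y' = b) by (destruct H3; lra).
  exists (Rmin dy eta). split. apply Rmin_pos; auto. intros s z Hs Hs2 Hz. apply Hgood; auto. lra.
Qed.

Lemma derive_cont_pt (g : R -> R) x l : is_derive g x l -> continuity_pt g x.
Proof. intros H. apply continuity_pt_filterlim. apply (ex_derive_continuous (K:=R_AbsRing) (V:=R_NormedModule)). exists l. exact H. Qed.

Lemma interior_min (g g1 : R -> R) (x0 g2 r : R) : 0 < r ->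
  (forall y, Rabs (y - x0) < r -> is_derive g y (g1 y)) ->
  is_derive g1 x0 g2 ->
  (forall y, Rabs (y - x0) < r -> g x0 <= g y) -> 0 <= g2.
Proof.
  intros Hr Hd Hd1 Hmin.
  assert (HD0 := Hd x0 ltac:(rewrite Rminus_eq_0, Rabs_R0; lra)).
  assert (Hg10 : g1 x0 = 0).
  { assert (W := dw_of_derive (fun _ => True) _ _ _ HD0).
    apply Rle_antisym.
    - apply (dw_le _ _ _ _ 0 W). intros eta Heta. exists (x0 - Rmin eta r / 2).
      assert (Hm1 := Rmin_l eta r). assert (Hm2 := Rmin_r eta r). assert (0 < Rmin eta r) by (apply Rmin_pos; lra).
      split; auto. split. lra. split. rewrite Rabs_left; lra.
      apply quot_le_neg. lra. rewrite Rmult_0_l. assert (g x0 <= g (x0 - Rmin eta r / 2)). apply Hmin. rewrite Rabs_left; lra. lra.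
    - apply (dw_ge _ _ _ _ 0 W). intros eta Heta. exists (x0 + Rmin eta r / 2).
      assert (Hm1 := Rmin_l eta r). assert (Hm2 := Rmin_r eta r). assert (0 < Rmin eta r) by (apply Rmin_pos; lra).
      split; auto. split. lra. split. rewrite Rabs_right; lra.
      apply quot_ge. lra. rewrite Rmult_0_l. assert (g x0 <= g (x0 + Rmin eta r / 2)). apply Hmin. rewrite Rabs_right; lra. lra. }
  destruct (Rle_lt_dec 0 g2) as [h|h]; auto. exfalso.
  assert (W1 := dw_of_derive (fun _ => True) _ _ _ Hd1).
  destruct (W1 (- g2 / 2)) as [eta [Heta K]]; [lra|].
  set (h0 := Rmin eta r).
  assert (Hm1 : h0 <= eta) by apply Rmin_l. assert (Hm2 : h0 <= r) by apply Rmin_r. assert (0 < h0) by (apply Rmin_pos; lra).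
  assert (Neg : forall y, x0 < y < x0 + h0 -> g1 y < 0).
  { intros y Hy. specialize (K y I ltac:(lra) ltac:(rewrite Rabs_right; lra)).
    rewrite Hg10 in K. apply Rabs_def2 in K. destruct K as [K1 K2].
    assert (g1 y / (y - x0) < 0) by lra.
    assert (E : g1 y = g1 y / (y - x0) * (y - x0)) by (field; lra). rewrite E.
    apply Rmult_neg_pos; lra. }
  assert (Dec : forall y1 y2, x0 < y1 < y2 -> y2 < x0 + h0 -> g y2 < g y1).
  { intros y1 y2 H1 H2. destruct (MVT_gen g y1 y2 g1) as [c [Hc Ec]].
    - intros x Hx. rewrite Rmin_left in Hx by lra. rewrite Rmax_right in Hx by lra. apply Hd. rewrite Rabs_right; lra.
    - intros x Hx. rewrite Rmin_left in Hx by lra. rewrite Rmax_right in Hx by lra.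
      eapply derive_cont_pt. apply Hd. rewrite Rabs_right; lra.
    - rewrite Rmin_left in Hc by lra. rewrite Rmax_right in Hc by lra.
      assert (g1 c < 0) by (apply Neg; lra). nra. }
  set (y2 := x0 + h0 / 2). set (y1 := x0 + h0 / 4).
  assert (g y2 < g y1) by (apply Dec; unfold y1, y2; lra).
  assert (g y1 <= g x0).
  { destruct (Rle_lt_dec (g y1) (g x0)) as [hh|hh]; auto. exfalso.
    assert (Hc := derive_cont_pt _ _ _ HD0).
    destruct (Hc (g y1 - g x0)) as [al [Hal Kal]]. lra.
    set (y3 := x0 + Rmin al (h0 / 4) / 2).
    assert (Hm5 := Rmin_l al (h0/4)). assert (Hm6 := Rmin_r al (h0/4)). assert (0 < Rmin al (h0/4)) by (apply Rmin_pos; lra).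
    specialize (Kal y3). simpl in Kal. unfold R_dist in Kal.
    assert (Rabs (g y3 - g x0) < g y1 - g x0). apply Kal. split. split. exact I. unfold y3; intro; lra. unfold y3. replace (x0 + Rmin al (h0 / 4) / 2 - x0) with (Rmin al (h0 / 4) / 2) by ring. rewrite Rabs_right; lra.
    assert (g y1 < g y3) by (apply Dec; unfold y1, y3; lra).
    match goal with Hq : Rabs (g y3 - g x0) < _ |- _ => apply Rabs_def2 in Hq end. lra. }
  assert (g x0 <= g y2) by (apply Hmin; unfold y2; rewrite Rabs_right; lra).
  lra.
Qed.

Lemma isd_plus (f g : R -> R) (x l m : R) : is_derive f x l -> is_derive g x m -> is_derive (fun s => f s + g s) x (l + m).
Proof. intros H1 H2. apply (is_derive_plus f g x l m H1 H2). Qed.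
Lemma isd_minus (f g : R -> R) (x l m : R) : is_derive f x l -> is_derive g x m -> is_derive (fun s => f s - g s) x (l - m).
Proof. intros H1 H2. apply (is_derive_minus f g x l m H1 H2). Qed.
Lemma isd_ext (f g : R -> R) (x l m : R) : (forall s, f s = g s) -> l = m -> is_derive f x l -> is_derive g x m.
Proof. intros E1 E2 H. subst. apply (is_derive_ext f g x m E1 H). Qed.

Ltac fixring := repeat match goal with |- context [?a + - ?b] => replace (a + - b) with (a - b) by ring end; try ring.

Lemma isd_const (c x : R) : is_derive (fun _ => c) x 0.
Proof. apply (is_derive_const (K:=R_AbsRing) (V:=R_NormedModule)). Qed.

Lemma cont_eps f x : continuity_pt f x -> forall eps, 0 < eps -> exists del, 0 < del /\
  forall y, Rabs (y - x) < del -> Rabs (f y - f x) < eps.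
Proof.
  intros H eps Heps. destruct (H eps Heps) as [al [Hal K]]. exists al. split; auto.
  intros y Hy. destruct (Req_dec y x). subst. rewrite Rminus_eq_0, Rabs_R0. auto.
  apply K. split. split. exact I. auto. exact Hy.
Qed.

Lemma cont2_mono (D D' : R -> R -> Prop) g : (forall t x, D' t x -> D t x) -> cont2_on D g -> cont2_on D' g.
Proof.
  intros HD H t x Dtx eps Heps. destruct (H t x (HD _ _ Dtx) eps Heps) as [del [Hdel K]].
  exists del. split; [exact Hdel|]. intros s y Dsy. apply K. auto.
Qed.

Lemma cont2_plus D g1 g2 : cont2_on D g1 -> cont2_on D g2 -> cont2_on D (fun t x => g1 t x + g2 t x).
Proof.
  intros H1 H2 t x Dtx eps Heps.
  destruct (H1 t x Dtx (eps/2)) as [d1 [Hd1 K1]]; [lra|].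
  destruct (H2 t x Dtx (eps/2)) as [d2 [Hd2 K2]]; [lra|].
  exists (Rmin d1 d2). split. apply Rmin_pos; auto. intros s y Dsy Hs Hy.
  assert (Hm1 := Rmin_l d1 d2). assert (Hm2 := Rmin_r d1 d2).
  specialize (K1 s y Dsy ltac:(lra) ltac:(lra)). specialize (K2 s y Dsy ltac:(lra) ltac:(lra)).
  replace (g1 s y + g2 s y - (g1 t x + g2 t x)) with ((g1 s y - g1 t x) + (g2 s y - g2 t x)) by ring.
  eapply Rle_lt_trans. apply Rabs_triang. lra.
Qed.

Lemma cont2_opp D g : cont2_on D g -> cont2_on D (fun t x => - g t x).
Proof.
  intros H t x Dtx eps Heps. destruct (H t x Dtx eps Heps) as [del [Hdel K]]. exists del. split; auto.
  intros s y Dsy Hs Hy. replace (- g s y - - g t x) with (- (g s y - g t x)) by ring. rewrite Rabs_Ropp. auto.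
Qed.

Lemma cont2_minus D g1 g2 : cont2_on D g1 -> cont2_on D g2 -> cont2_on D (fun t x => g1 t x - g2 t x).
Proof. intros H1 H2. apply (cont2_plus D g1 (fun t x => - g2 t x) H1 (cont2_opp D g2 H2)). Qed.

Lemma cont2_ext D g1 g2 : (forall t x, g1 t x = g2 t x) -> cont2_on D g1 -> cont2_on D g2.
Proof. intros E H t x Dtx eps Heps. destruct (H t x Dtx eps Heps) as [del [Hdel K]]. exists del. split; auto.
  intros s y Dsy Hs Hy. rewrite <- !E. auto. Qed.

Lemma cont2_sep D (p q : R -> R) : (forall t, continuity_pt p t) -> (forall x, continuity_pt q x) ->
  cont2_on D (fun t x => p t * q x).
Proof.
  intros Hp Hq t x _ eps Heps.
  set (A := Rabs (p t) + 1). set (B := Rabs (q x) + 1).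
  assert (HA : 0 < A) by (unfold A; pose proof (Rabs_pos (p t)); lra).
  assert (HB : 0 < B) by (unfold B; pose proof (Rabs_pos (q x)); lra).
  set (e1 := Rmin 1 (eps / (2 * B))). set (e2 := eps / (2 * (A + 1))).
  assert (He1 : 0 < e1). { apply Rmin_pos. lra. apply Rdiv_lt_0_compat; lra. }
  assert (He2 : 0 < e2). { apply Rdiv_lt_0_compat; lra. }
  destruct (cont_eps p t (Hp t) e1 He1) as [d1 [Hd1 K1]].
  destruct (cont_eps q x (Hq x) e2 He2) as [d2 [Hd2 K2]].
  exists (Rmin d1 d2). split. apply Rmin_pos; auto. intros s y _ Hs Hy.
  assert (Hm1 := Rmin_l d1 d2). assert (Hm2 := Rmin_r d1 d2).
  specialize (K1 s ltac:(lra)). specialize (K2 y ltac:(lra)).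
  replace (p s * q y - p t * q x) with (p s * (q y - q x) + (p s - p t) * q x) by ring.
  eapply Rle_lt_trans. apply Rabs_triang. rewrite !Rabs_mult.
  assert (Hps : Rabs (p s) <= A + 1).
  { unfold A. pose proof (Rabs_triang_inv (p s) (p t)). assert (e1 <= 1) by apply Rmin_l. lra. }
  assert (Hqx : Rabs (q x) <= B) by (unfold B; lra).
  assert (E1 : e1 * B <= eps / 2).
  { assert (e1 <= eps / (2 * B)) by apply Rmin_r.
    assert (eps / (2 * B) * B = eps / 2) by (field; lra). nra. }
  assert (E2 : (A + 1) * e2 = eps / 2) by (unfold e2; field; lra).
  pose proof (Rabs_pos (p s)). pose proof (Rabs_pos (q y - q x)). pose proof (Rabs_pos (p s - p t)). pose proof (Rabs_pos (q x)).
  assert (Rabs (p s) * Rabs (q y - q x) <= (A + 1) * e2) by (apply Rmult_le_compat; lra).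
  assert (Rabs (p s - p t) * Rabs (q x) < e1 * B).
  { destruct (Req_dec (Rabs (q x)) 0) as [Z|Z]. rewrite Z, Rmult_0_r. nra.
    apply Rle_lt_trans with (e1 * Rabs (q x)). apply Rmult_le_compat_r; lra.
    apply Rmult_lt_compat_l. lra. unfold B; lra. }
  nra.
Qed.

Lemma cont2_const D c : cont2_on D (fun _ _ => c).
Proof. intros t x _ eps Heps. exists 1. split. lra. intros. rewrite Rminus_eq_0, Rabs_R0. auto. Qed.

Lemma Rmin_cases a b : Rmin a b = a \/ Rmin a b = b.
Proof. unfold Rmin; destruct Rle_dec; auto. Qed.

Lemma rect_comp (u ut ux uxx : R -> R -> R) d t1 t2 a b : 0 <= d -> t1 <= t2 -> a < b ->
  cont2_on (fun t x => t1 <= t <= t2 /\ a <= x <= b) u ->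
  (forall t x, t1 < t <= t2 -> a < x < b ->
     is_derive (fun s => u s x) t (ut t x) /\ is_derive (u t) x (ux t x) /\
     is_derive (ux t) x (uxx t x) /\ d * uxx t x <= ut t x) ->
  (forall x, a <= x <= b -> 0 <= u t1 x) ->
  (forall t, t1 <= t <= t2 -> 0 <= u t a /\ 0 <= u t b) ->
  forall t x, t1 <= t <= t2 -> a <= x <= b -> 0 <= u t x.
Proof.
  intros Hd Ht Hab Hc Hder Hbot Hside.
  assert (Main : forall eps, 0 < eps -> forall t, t1 <= t <= t2 -> forall x, a <= x <= b ->
            0 < u t x + eps * (1 + t - t1)).
  { intros eps Heps.
    set (U := fun t x => u t x + eps * (1 + t - t1)).
    assert (HcU : cont2_on (fun t x => t1 <= t <= t2 /\ a <= x <= b) U).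
    { apply cont2_plus; auto. apply (cont2_ext _ (fun t x => (eps * (1 + t - t1)) * 1)).
      intros; ring. apply cont2_sep. intros. apply derive_cont_pt with (eps * 1). auto_derive; auto; ring.
      intros. apply continuity_pt_const. intros ? ?; auto. }
    apply (real_induction (fun t => forall x, a <= x <= b -> 0 < U t x) t1 t2 Ht).
    - intros x Hx. unfold U. specialize (Hbot x Hx). nra.
    - intros t Htt Hprev.
      destruct (persist U t t2 a b ltac:(lra) (Hprev t ltac:(lra))) as [dl [Hdl Kdl]].
      { intros x Hx eps' Heps'. destruct (HcU t x ltac:(split; lra) eps' Heps') as [del [Hdel K]].
        exists del. split; [exact Hdel|]. intros s y Hs Hs2 Hy Hyx. apply K. split; lra.
        rewrite Rabs_right; lra. auto. }
      exists dl. split; [exact Hdl|]. intros s Hs Hs2 x Hx. apply Kdl; auto; lra.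
    - intros t Htt Hprev.
      assert (Ge : forall x, a <= x <= b -> 0 <= U t x).
      { intros x Hx. destruct (Rle_lt_dec 0 (U t x)) as [h|h]; auto. exfalso.
        destruct (HcU t x ltac:(split; lra) (- U t x) ltac:(lra)) as [del [Hdel K]].
        set (s := t - Rmin del (t - t1) / 2).
        assert (Hm1 : Rmin del (t - t1) <= del) by apply Rmin_l.
        assert (Hm2 : Rmin del (t - t1) <= t - t1) by apply Rmin_r.
        assert (Hm3 : 0 < Rmin del (t - t1)) by (apply Rmin_pos; lra).
        specialize (K s x ltac:(unfold s; split; lra) ltac:(unfold s; rewrite Rabs_left; lra)
                        ltac:(rewrite Rminus_eq_0, Rabs_R0; lra)).
        specialize (Hprev s ltac:(unfold s; lra) x Hx). apply Rabs_def2 in K. lra. }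
      intros x0 Hx0. destruct (Rle_lt_dec (U t x0) 0) as [h|h]; auto. exfalso.
      assert (Z : U t x0 = 0) by (specialize (Ge x0 Hx0); lra).
      assert (Ha : x0 <> a). { intro E. subst x0. destruct (Hside t ltac:(lra)). unfold U in Z. nra. }
      assert (Hb : x0 <> b). { intro E. subst x0. destruct (Hside t ltac:(lra)). unfold U in Z. nra. }
      assert (Hx0' : a < x0 < b) by (destruct Hx0 as [[h1|h1] [h2|h2]]; subst; try tauto; lra).
      destruct (Hder t x0 ltac:(lra) Hx0') as [Dt [Dx [Dxx Ineq]]].
      assert (DtU : is_derive (fun s => U s x0) t (ut t x0 + eps)).
      { unfold U. apply isd_plus. exact Dt. auto_derive; auto; ring. }
      assert (Tle : ut t x0 + eps <= 0).
      { apply (dw_le (fun _ => True) _ _ _ 0 (dw_of_derive _ _ _ _ DtU)). intros eta Heta.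
        set (s := t - Rmin eta (t - t1) / 2).
        assert (Hm1 : Rmin eta (t - t1) <= eta) by apply Rmin_l.
        assert (Hm2 : Rmin eta (t - t1) <= t - t1) by apply Rmin_r.
        assert (Hm3 : 0 < Rmin eta (t - t1)) by (apply Rmin_pos; lra).
        exists s. split; [exact I|]. split. unfold s; lra. split. unfold s; rewrite Rabs_left; lra.
        apply quot_le_neg. unfold s; lra. rewrite Rmult_0_l, Z.
        specialize (Hprev s ltac:(unfold s; lra) x0 ltac:(lra)). lra. }
      set (r := Rmin (x0 - a) (b - x0)).
      assert (Hr1 : r <= x0 - a) by apply Rmin_l. assert (Hr2 : r <= b - x0) by apply Rmin_r.
      assert (Hr : 0 < r) by (apply Rmin_pos; lra).
      assert (Xge : 0 <= uxx t x0).
      { apply (interior_min (U t) (ux t) x0 (uxx t x0) r Hr).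
        - intros y Hy. apply Rabs_def2 in Hy.
          destruct (Hder t y ltac:(lra) ltac:(lra)) as [_ [Dy _]].
          unfold U. apply (isd_ext (fun s => u t s + eps * (1 + t - t1)) _ _ (ux t y + 0)). intros; auto. ring.
          apply isd_plus. exact Dy. apply isd_const.
        - exact Dxx.
        - intros y Hy. apply Rabs_def2 in Hy. rewrite Z. apply Ge. lra. }
      nra. }
  intros t x Ht' Hx. destruct (Rle_lt_dec 0 (u t x)) as [h|h]; auto. exfalso.
  set (eps := - u t x / (2 * (1 + t2 - t1))).
  assert (Heps : 0 < eps) by (unfold eps; apply Rdiv_lt_0_compat; lra).
  specialize (Main eps Heps t Ht' x Hx).
  assert (E : eps * (1 + t2 - t1) = - u t x / 2) by (unfold eps; field; lra).
  assert (eps * (1 + t - t1) <= eps * (1 + t2 - t1)) by (apply Rmult_le_compat_l; lra).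
  lra.
Qed.

Lemma exp_le' x y : x <= y -> exp x <= exp y.
Proof. intros [H|H]. left; apply exp_increasing; auto. subst; lra. Qed.

Definition EdgeSup (d : R) (u ut ux uxx : R -> R -> R) : Prop :=
  cont2_on (fun t x => 0 <= t /\ 0 <= x <= 1) u /\
  (forall t x, 0 < t -> 0 < x < 1 ->
     is_derive (fun s => u s x) t (ut t x) /\ is_derive (u t) x (ux t x) /\
     is_derive (ux t) x (uxx t x) /\ d * uxx t x <= ut t x) /\
  (forall t x, 0 <= t -> 0 <= x <= 1 -> 0 <= u t x) /\
  (forall t, 0 < t -> u t 0 = 0 -> forall k r, 0 < k -> 0 < r ->
       ~ (forall y, 0 < y <= r -> k * y <= u t y)) /\
  (forall t, 0 < t -> u t 1 = 0 -> forall k r, 0 < k -> 0 < r ->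
       ~ (forall y, 0 < y <= r -> k * y <= u t (1 - y))).

Lemma hopf_right d u ut ux uxx t0 del x0 x1 eta : 0 < d -> EdgeSup d u ut ux uxx ->
  0 < del -> 0 <= t0 - del -> 0 <= x0 < x1 -> x1 <= 1 -> 0 < eta ->
  (forall s, t0 - del <= s <= t0 -> eta <= u s x1) ->
  exists k, 0 < k /\ forall y, x0 <= y <= x1 -> k * (y - x0) <= u t0 y.
Proof.
  intros Hd [Hc [Hder [Hpos _]]] Hdel Ht Hx Hx1 Heta Hside.
  set (r := x1 - x0). set (mu := r / (d * del)). set (nu := d * mu * mu).
  assert (Hr : 0 < r) by (unfold r; lra).
  assert (Hmu : 0 < mu) by (unfold mu; apply Rdiv_lt_0_compat; nra).
  assert (Hnu : 0 < nu) by (unfold nu; apply Rmult_lt_0_compat; [apply Rmult_lt_0_compat|]; lra).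
  assert (Hmr : nu * del = mu * r). { unfold nu, mu. field. split; lra. }
  set (eps := eta / exp (mu * r)).
  assert (Heps : 0 < eps) by (unfold eps; apply Rdiv_lt_0_compat; auto; apply exp_pos).
  assert (Hepsr : eps * exp (mu * r) = eta) by (unfold eps; field; apply Rgt_not_eq, exp_pos).
  set (z := fun t x => eps * exp (nu * (t - t0)) * exp (mu * (x - x0)) - eps).
  assert (HU := rect_comp (fun t x => u t x - z t x)
    (fun t x => ut t x - eps * nu * exp (nu * (t - t0)) * exp (mu * (x - x0)))
    (fun t x => ux t x - eps * mu * exp (nu * (t - t0)) * exp (mu * (x - x0)))
    (fun t x => uxx t x - eps * mu * mu * exp (nu * (t - t0)) * exp (mu * (x - x0)))
    d (t0 - del) t0 x0 x1 ltac:(lra) ltac:(lra) ltac:(lra)).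
  assert (Hz0 : forall t x, t <= t0 -> x0 <= x <= x1 -> z t x <= eta - eps).
  { intros t x Ht' Hx'. unfold z. rewrite Rmult_assoc, <- exp_plus.
    assert (exp (nu * (t - t0) + mu * (x - x0)) <= exp (mu * r)).
    { apply exp_le'. assert (nu * (t - t0) <= 0) by nra. assert (mu * (x - x0) <= mu * r) by (unfold r; nra). lra. }
    nra. }
  assert (Fin : forall t x, t0 - del <= t <= t0 -> x0 <= x <= x1 -> 0 <= u t x - z t x).
  { apply HU.
    - apply cont2_minus. apply (cont2_mono (fun t x => 0 <= t /\ 0 <= x <= 1)); auto. intros t x [[? ?] [? ?]]; split; lra.
      apply (cont2_ext _ (fun t x => (eps * exp (nu * (t - t0))) * exp (mu * (x - x0)) - eps)). intros; unfold z; ring.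
      apply cont2_minus. apply cont2_sep. intros. eapply derive_cont_pt. auto_derive; auto.
      intros. eapply derive_cont_pt. auto_derive; auto. apply cont2_const.
    - intros t x Ht' Hx'. destruct (Hder t x ltac:(lra) ltac:(lra)) as [D1 [D2 [D3 I]]].
      split; [|split; [|split]].
      + apply isd_minus; auto. unfold z. auto_derive; auto; fixring.
      + apply isd_minus; auto. unfold z. auto_derive; auto; fixring.
      + apply isd_minus; auto. auto_derive; auto; fixring.
      + assert (E : d * (eps * mu * mu * exp (nu * (t - t0)) * exp (mu * (x - x0))) =
                    eps * nu * exp (nu * (t - t0)) * exp (mu * (x - x0))) by (unfold nu; ring).
        lra.
    - intros x Hx'. assert (z (t0 - del) x <= 0).
      { unfold z. rewrite Rmult_assoc, <- exp_plus.
        assert (exp (nu * (t0 - del - t0) + mu * (x - x0)) <= 1).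
        { rewrite <- exp_0. apply exp_le'. assert (mu * (x - x0) <= mu * r) by (unfold r; nra). nra. }
        nra. }
      assert (0 <= u (t0 - del) x) by (apply Hpos; lra). lra.
    - intros t Ht'. split.
      + assert (z t x0 <= 0).
        { unfold z. replace (x0 - x0) with 0 by ring. rewrite Rmult_0_r, exp_0.
          assert (exp (nu * (t - t0)) <= 1) by (rewrite <- exp_0; apply exp_le'; nra). nra. }
        assert (0 <= u t x0) by (apply Hpos; lra). lra.
      + assert (z t x1 <= eta - eps) by (apply Hz0; lra). specialize (Hside t Ht'). lra. }
  exists (eps * mu). split. nra.
  intros y Hy. specialize (Fin t0 y ltac:(lra) Hy). unfold z in Fin.
  replace (t0 - t0) with 0 in Fin by ring. rewrite Rmult_0_r, exp_0 in Fin.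
  pose proof (exp_ineq1_le (mu * (y - x0))). nra.
Qed.

Lemma vert_prop d u ut ux uxx t1 x1 : 0 < d -> EdgeSup d u ut ux uxx -> 0 <= t1 -> 0 <= x1 <= 1 ->
  0 < u t1 x1 -> forall t, t1 < t -> exists x, 0 <= x <= 1 /\ 0 < u t x.
Proof.
  intros Hd ES Ht1 Hx1 Hpos1 t Ht.
  destruct ES as [Hc [Hder [Hpos _]]].
  set (c := u t1 x1) in *. assert (Ec : c = u t1 x1) by reflexivity. clearbody c.
  destruct (Hc t1 x1 ltac:(split; lra) (c / 2) ltac:(lra)) as [eta [Heta K]].
  set (a := Rmax 0 (x1 - eta / 2)). set (b := Rmin 1 (x1 + eta / 2)).
  assert (Ha1 : 0 <= a) by apply Rmax_l. assert (Ha2 : x1 - eta / 2 <= a) by apply Rmax_r.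
  assert (Ha3 : a = 0 \/ a = x1 - eta / 2) by (unfold a, Rmax; destruct Rle_dec; auto).
  assert (Hb1 : b <= 1) by apply Rmin_l. assert (Hb2 : b <= x1 + eta / 2) by apply Rmin_r.
  assert (Hb3 : b = 1 \/ b = x1 + eta / 2) by (unfold b, Rmin; destruct Rle_dec; auto).
  assert (Hab : a < b) by (destruct Ha3, Hb3; lra).
  assert (Hbot : forall x, a <= x <= b -> c / 2 < u t1 x).
  { intros x Hx. specialize (K t1 x ltac:(split; lra) ltac:(rewrite Rminus_eq_0, Rabs_R0; lra)
       ltac:(apply Rabs_def1; destruct Ha3, Hb3; lra)). apply Rabs_def2 in K. rewrite <- Ec in K. lra. }
  set (k := PI / (b - a)). set (lam := d * k * k).
  assert (Hk : 0 < k) by (unfold k; apply Rdiv_lt_0_compat; [apply PI_RGT_0|lra]).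
  set (z := fun s x => c / 2 * exp (- lam * (s - t1)) * sin (k * (x - a))).
  assert (Fin : forall s x, t1 <= s <= t -> a <= x <= b -> 0 <= u s x - z s x).
  { apply (rect_comp (fun s x => u s x - z s x)
      (fun s x => ut s x - - (c / 2 * lam * exp (- lam * (s - t1)) * sin (k * (x - a))))
      (fun s x => ux s x - c / 2 * exp (- lam * (s - t1)) * (k * cos (k * (x - a))))
      (fun s x => uxx s x - - (c / 2 * exp (- lam * (s - t1)) * (k * k * sin (k * (x - a)))))
      d t1 t a b ltac:(lra) ltac:(lra) Hab).
    - apply cont2_minus. apply (cont2_mono (fun t x => 0 <= t /\ 0 <= x <= 1)); auto.
      intros s x [[? ?] [? ?]]; split; lra.
      apply cont2_sep. intros. eapply derive_cont_pt. auto_derive; auto.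
      intros. eapply derive_cont_pt. auto_derive; auto.
    - intros s x Hs Hx. destruct (Hder s x ltac:(lra) ltac:(lra)) as [D1 [D2 [D3 I]]].
      split; [|split; [|split]].
      + apply isd_minus; auto. unfold z. auto_derive; auto. fixring.
      + apply isd_minus; auto. unfold z. auto_derive; auto. fixring.
      + apply isd_minus; auto. auto_derive; auto. fixring.
      + assert (E : d * (c / 2 * exp (- lam * (s - t1)) * (k * k * sin (k * (x - a)))) =
                    c / 2 * lam * exp (- lam * (s - t1)) * sin (k * (x - a))) by (unfold lam; ring).
        lra.
    - intros x Hx. unfold z. replace (- lam * (t1 - t1)) with 0 by ring. rewrite exp_0.
      specialize (Hbot x Hx). pose proof (SIN_bound (k * (x - a))). nra.
    - intros s Hs. unfold z. replace (a - a) with 0 by ring. rewrite Rmult_0_r, sin_0.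
      replace (k * (b - a)) with PI by (unfold k; field; lra). rewrite sin_PI.
      split; rewrite Rmult_0_r, Rminus_0_r; apply Hpos; lra. }
  exists ((a + b) / 2). split. lra.
  specialize (Fin t ((a + b) / 2) ltac:(lra) ltac:(lra)). unfold z in Fin.
  replace (k * ((a + b) / 2 - a)) with (PI / 2) in Fin by (unfold k; field; lra).
  rewrite sin_PI2 in Fin. pose proof (exp_pos (- lam * (t - t1))). nra.
Qed.

Lemma edge_half d u ut ux uxx t0 x0 x1 : 0 < d -> EdgeSup d u ut ux uxx -> 0 < t0 ->
  0 <= x0 < x1 -> x1 <= 1 -> 0 < u t0 x1 -> 0 < u t0 x0.
Proof.
  intros Hd ES Ht0 Hx0 Hx1 Hp1.
  assert (ES' := ES). destruct ES' as [Hc [Hder [Hpos [BC0 _]]]].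
  destruct (Rlt_le_dec 0 (u t0 x0)) as [h|h]; auto. exfalso.
  assert (Z0 : u t0 x0 = 0) by (specialize (Hpos t0 x0 ltac:(lra) ltac:(lra)); lra).
  set (Zs := fun y => x0 <= y <= x1 /\ u t0 y = 0).
  assert (Hb : bound Zs) by (exists x1; intros y [Hy _]; lra).
  assert (Hne : exists y, Zs y) by (exists x0; split; auto; lra).
  destruct (completeness Zs Hb Hne) as [m Hm].
  assert (Hm1 : x0 <= m) by (apply Hm; split; auto; lra).
  assert (Hm2 : m <= x1) by (apply Hm; intros y [Hy _]; lra).
  assert (Zm : u t0 m = 0).
  { destruct (Rlt_le_dec 0 (u t0 m)) as [hm|hm].
    2:{ specialize (Hpos t0 m ltac:(lra) ltac:(lra)). lra. }
    exfalso. destruct (Hc t0 m ltac:(split; lra) (u t0 m) hm) as [eta [Heta K]].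
    destruct (lub_approx Zs m Hm eta Heta) as [y [[Hy1 Hy2] Hy3]].
    assert (y <= m) by (apply Hm; split; auto).
    specialize (K t0 y ltac:(split; lra) ltac:(rewrite Rminus_eq_0, Rabs_R0; lra) ltac:(apply Rabs_def1; lra)).
    rewrite Hy2 in K. apply Rabs_def2 in K. lra. }
  assert (Hmx1 : m < x1) by (destruct Hm2; auto; subst; lra).
  assert (PosR : forall y, m < y <= x1 -> 0 < u t0 y).
  { intros y Hy. destruct (Rlt_le_dec 0 (u t0 y)) as [hy|hy]; auto.
    assert (u t0 y = 0) by (specialize (Hpos t0 y ltac:(lra) ltac:(lra)); lra).
    assert (y <= m) by (apply Hm; split; auto; lra). lra. }
  destruct (Hc t0 x1 ltac:(split; lra) (u t0 x1 / 2) ltac:(lra)) as [dl [Hdl K]].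
  set (del := Rmin dl t0 / 2).
  assert (Hdel1 : Rmin dl t0 <= dl) by apply Rmin_l. assert (Hdel2 : Rmin dl t0 <= t0) by apply Rmin_r.
  assert (Hdel3 : 0 < Rmin dl t0) by (apply Rmin_pos; lra).
  destruct (hopf_right d u ut ux uxx t0 del m x1 (u t0 x1 / 2) Hd ES) as [k [Hk Kk]].
  unfold del; lra. unfold del; lra. lra. lra. lra.
  { intros s Hs. specialize (K s x1 ltac:(split; unfold del in Hs; lra) ltac:(apply Rabs_def1; unfold del in Hs; lra)
        ltac:(rewrite Rminus_eq_0, Rabs_R0; lra)). apply Rabs_def2 in K. lra. }
  destruct (Req_dec m 0) as [E|E].
  - subst m. apply (BC0 t0 Ht0 Zm k x1 Hk ltac:(lra)). intros y Hy.
    specialize (Kk y ltac:(lra)). lra.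
  -
    destruct (Hder t0 m Ht0 ltac:(lra)) as [_ [Dm _]].
    assert (W := dw_of_derive (fun _ => True) _ _ _ Dm).
    assert (Ge : k <= ux t0 m).
    { apply (dw_ge _ _ _ _ k W). intros eta Heta.
      set (y := m + Rmin eta (x1 - m) / 2).
      assert (H1 : Rmin eta (x1 - m) <= eta) by apply Rmin_l. assert (H2 : Rmin eta (x1 - m) <= x1 - m) by apply Rmin_r.
      assert (H3 : 0 < Rmin eta (x1 - m)) by (apply Rmin_pos; lra).
      exists y. split; [exact I|]. split. unfold y; lra. split. unfold y. rewrite Rabs_right; lra.
      apply quot_ge. unfold y; lra. rewrite Zm, Rminus_0_r. apply Kk. unfold y; lra. }
    assert (Le : ux t0 m <= 0).
    { apply (dw_le _ _ _ _ 0 W). intros eta Heta.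
      set (y := m - Rmin eta m / 2).
      assert (H1 : Rmin eta m <= eta) by apply Rmin_l. assert (H2 : Rmin eta m <= m) by apply Rmin_r.
      assert (H3 : 0 < Rmin eta m) by (apply Rmin_pos; lra).
      exists y. split; [exact I|]. split. unfold y; lra. split. unfold y. rewrite Rabs_left; lra.
      apply quot_le_neg. unfold y; lra. rewrite Zm, Rmult_0_l. assert (0 <= u t0 y) by (apply Hpos; unfold y; lra). lra. }
    lra.
Qed.

Lemma edge_refl d u ut ux uxx : EdgeSup d u ut ux uxx ->
  EdgeSup d (fun t x => u t (1 - x)) (fun t x => ut t (1 - x)) (fun t x => - ux t (1 - x)) (fun t x => uxx t (1 - x)).
Proof.
  intros [Hc [Hder [Hpos [BC0 BC1]]]]. split; [|split; [|split; [|split]]].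
  - intros t x Dtx eps Heps. destruct (Hc t (1 - x) ltac:(destruct Dtx; split; lra) eps Heps) as [del [Hdel K]].
    exists del. split; [exact Hdel|]. intros s y Dsy Hs Hy. apply K; auto. destruct Dsy; split; lra.
    replace (1 - y - (1 - x)) with (- (y - x)) by ring. rewrite Rabs_Ropp. auto.
  - intros t x Ht Hx. destruct (Hder t (1 - x) Ht ltac:(lra)) as [D1 [D2 [D3 I]]].
    split; [exact D1|split; [|split; [|exact I]]].
    + assert (Hg : is_derive (fun y : R => 1 - y) x (-1)) by (auto_derive; auto; ring).
      assert (H := is_derive_comp (u t) (fun y => 1 - y) x _ _ D2 Hg).
      apply (isd_ext _ _ x (scal (-1) (ux t (1 - x))) _ (fun _ => eq_refl)).
      unfold scal; simpl; unfold mult; simpl; ring. exact H.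
    + assert (Hg : is_derive (fun y : R => 1 - y) x (-1)) by (auto_derive; auto; ring).
      assert (H := is_derive_comp (ux t) (fun y => 1 - y) x _ _ D3 Hg).
      assert (H2 := is_derive_opp _ _ _ H).
      apply (isd_ext _ _ x (opp (scal (-1) (uxx t (1 - x)))) _ (fun _ => eq_refl)).
      unfold scal, opp; simpl; unfold mult; simpl; ring. exact H2.
  - intros t x Ht Hx. apply Hpos; lra.
  - intros t Ht Z k r Hk Hr N. replace (1 - 0) with 1 in Z by ring. apply (BC1 t Ht Z k r Hk Hr N).
  - intros t Ht Z k r Hk Hr N. replace (1 - 1) with 0 in Z by ring. apply (BC0 t Ht Z k r Hk Hr).
    intros y Hy. specialize (N y Hy). replace (1 - (1 - y)) with y in N by ring. auto.
Qed.

Lemma edge_pos d u ut ux uxx t0 : 0 < d -> EdgeSup d u ut ux uxx -> 0 < t0 ->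
  (exists x1, 0 <= x1 <= 1 /\ 0 < u t0 x1) -> forall x, 0 <= x <= 1 -> 0 < u t0 x.
Proof.
  intros Hd ES Ht [x1 [Hx1 P1]] x Hx.
  destruct (Rtotal_order x x1) as [h|[h|h]].
  - apply (edge_half d u ut ux uxx t0 x x1); auto; lra.
  - subst; auto.
  - assert (H := edge_half d _ _ _ _ t0 (1 - x) (1 - x1) Hd (edge_refl _ _ _ _ _ ES) Ht ltac:(lra) ltac:(lra)).
    simpl in H. replace (1 - (1 - x)) with x in H by ring. replace (1 - (1 - x1)) with x1 in H by ring. auto.
Qed.

Definition bb (j : Z) : R := 1 + IZR j * IZR j.
Definition aa (al be : R) (j : Z) : R := be / al * (bb j + bb (j + 1)).

Lemma bb_pos j : 1 <= bb j.
Proof. unfold bb. nra. Qed.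
Lemma bb_succ j : bb (j + 1) <= 3 * bb j.
Proof. unfold bb. rewrite plus_IZR. nra. Qed.
Lemma bb_pred j : bb (j - 1) <= 3 * bb j.
Proof. unfold bb. rewrite minus_IZR. nra. Qed.
Lemma aa_eq al be j : 0 < al -> al * aa al be j = be * (bb j + bb (j + 1)).
Proof. intros H. unfold aa. field. lra. Qed.
Lemma aa_pos al be j : 0 < al -> 0 < be -> 0 < aa al be j.
Proof. intros H1 H2. unfold aa. pose proof (bb_pos j). pose proof (bb_pos (j+1)).
  apply Rmult_lt_0_compat. apply Rdiv_lt_0_compat; auto. lra. Qed.
Lemma aa_ge al be j : 0 < al -> 0 < be -> be / al * bb j <= aa al be j.
Proof. intros H1 H2. unfold aa. pose proof (bb_pos (j+1)).
  assert (0 < be / al) by (apply Rdiv_lt_0_compat; auto). nra. Qed.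

Lemma bb_large C : exists n : nat, forall j, (j > Z.of_nat n \/ j < - Z.of_nat n)%Z -> C < bb j.
Proof.
  destruct (archimed C) as [H1 H2].
  exists (Z.to_nat (up C)). intros j Hj.
  assert (E : IZR (Z.of_nat (Z.to_nat (up C))) >= IZR (up C)).
  { apply Rle_ge, IZR_le. lia. }
  unfold bb. destruct Hj as [Hj|Hj].
  - assert (IZR j >= IZR (Z.of_nat (Z.to_nat (up C))) + 1). { rewrite <- plus_IZR. apply Rle_ge, IZR_le. lia. }
    assert (0 <= IZR (Z.of_nat (Z.to_nat (up C)))) by (apply IZR_le; lia).
    nra.
  - assert (IZR j <= - IZR (Z.of_nat (Z.to_nat (up C))) - 1). { rewrite <- opp_IZR, <- minus_IZR. apply IZR_le. lia. }
    assert (0 <= IZR (Z.of_nat (Z.to_nat (up C)))) by (apply IZR_le; lia).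
    nra.
Qed.

Lemma fin_delta (Q : Z -> R -> Prop) :
  (forall j del del', 0 < del' <= del -> Q j del -> Q j del') ->
  (forall j, exists del, 0 < del /\ Q j del) ->
  forall n : nat, exists del, 0 < del /\ forall j, (- Z.of_nat n <= j <= Z.of_nat n)%Z -> Q j del.
Proof.
  intros Hm Hj n. induction n as [|n IH].
  - destruct (Hj 0%Z) as [del [Hd K]]. exists del. split; auto. intros j Hr.
    replace j with 0%Z by lia. auto.
  - destruct IH as [d0 [Hd0 K0]].
    destruct (Hj (Z.of_nat (S n))) as [d1 [Hd1 K1]].
    destruct (Hj (- Z.of_nat (S n))%Z) as [d2 [Hd2 K2]].
    set (dm := Rmin d0 (Rmin d1 d2)).
    assert (A0 : dm <= d0) by apply Rmin_l.
    assert (A1 : dm <= d1) by (unfold dm; pose proof (Rmin_r d0 (Rmin d1 d2)); pose proof (Rmin_l d1 d2); lra).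
    assert (A2 : dm <= d2) by (unfold dm; pose proof (Rmin_r d0 (Rmin d1 d2)); pose proof (Rmin_r d1 d2); lra).
    assert (A3 : 0 < dm) by (unfold dm; repeat apply Rmin_pos; auto).
    exists dm. split; auto. intros j Hr.
    destruct (Z.eq_dec j (Z.of_nat (S n))) as [E|E]. subst. apply (Hm _ d1); auto; lra.
    destruct (Z.eq_dec j (- Z.of_nat (S n))%Z) as [E2|E2]. subst. apply (Hm _ d2); auto; lra.
    apply (Hm _ d0). lra. apply K0. lia.
Qed.

Lemma Rabs_def2b x a : Rabs x <= a -> - a <= x <= a.
Proof. unfold Rabs; destruct Rcase_abs; lra. Qed.

Lemma lt_div_mul M e b : 0 < e -> M / e < b -> M < e * b.
Proof. intros He H. set (q := M / e) in *. assert (M = q * e) by (unfold q; field; lra). nra. Qed.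

Lemma weak_comp (alpha beta d : R) (f : R -> R) vl rl dl vtl vxl vxxl vu ru du vtu vxu vxxu T :
  0 < alpha -> 0 < beta -> 0 < d -> 0 < T ->
  (forall a b, exists L, forall x y, a <= x <= b -> a <= y <= b -> Rabs (f x - f y) <= L * Rabs (x - y)) ->
  regular vl rl dl vtl vxl vxxl ->
  (forall (t : R) (j : Z), 0 < t ->
      (forall x, 0 < x < 1 -> vtl j t x <= d * vxxl j t x) /\
      dl j t <= f (rl j t) + alpha * (vl j t 0 + vl (j - 1)%Z t 1) - 2 * beta * rl j t /\
      - d * vxl j t 0 + alpha * vl j t 0 <= beta * rl j t /\
      d * vxl j t 1 + alpha * vl j t 1 <= beta * rl (j + 1)%Z t) ->
  regular vu ru du vtu vxu vxxu ->
  (forall (t : R) (j : Z), 0 < t ->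
      (forall x, 0 < x < 1 -> vtu j t x >= d * vxxu j t x) /\
      du j t >= f (ru j t) + alpha * (vu j t 0 + vu (j - 1)%Z t 1) - 2 * beta * ru j t /\
      - d * vxu j t 0 + alpha * vu j t 0 >= beta * ru j t /\
      d * vxu j t 1 + alpha * vu j t 1 >= beta * ru (j + 1)%Z t) ->
  locally_bounded_in_time vl rl -> locally_bounded_in_time vu ru ->
  (forall (j : Z) x, 0 <= x <= 1 -> vl j 0 x <= vu j 0 x) ->
  (forall j : Z, rl j 0 <= ru j 0) ->
  forall (j : Z) x, 0 <= x <= 1 -> vl j T x <= vu j T x /\ rl j T <= ru j T.
Proof.
  intros Hal Hbe Hd HT Lip Regl Sl Regu Su LBl LBu I0v I0r.
  destruct (LBl T HT) as [Ml HMl]. destruct (LBu T HT) as [Mu HMu].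
  assert (HMl0 : 0 <= Ml) by (specialize (HMl 0 0%Z 0 ltac:(lra) ltac:(lra)); pose proof (Rabs_pos (vl 0%Z 0 0)); pose proof (Rabs_pos (rl 0%Z 0)); lra).
  assert (HMu0 : 0 <= Mu) by (specialize (HMu 0 0%Z 0 ltac:(lra) ltac:(lra)); pose proof (Rabs_pos (vu 0%Z 0 0)); pose proof (Rabs_pos (ru 0%Z 0)); lra).
  set (M := Ml + Mu). assert (EM : M = Ml + Mu) by reflexivity. clearbody M.
  assert (Bv : forall s j x, 0 <= s <= T -> 0 <= x <= 1 -> Rabs (vu j s x - vl j s x) <= M).
  { intros s j x Hs Hx. specialize (HMl s j x Hs Hx). specialize (HMu s j x Hs Hx).
    pose proof (Rabs_pos (rl j s)). pose proof (Rabs_pos (ru j s)).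
    unfold Rminus. eapply Rle_trans. apply Rabs_triang. rewrite Rabs_Ropp. lra. }
  assert (Br : forall s j, 0 <= s <= T -> Rabs (ru j s - rl j s) <= M /\ -M <= ru j s <= M /\ -M <= rl j s <= M).
  { intros s j Hs. specialize (HMl s j 0 Hs ltac:(lra)). specialize (HMu s j 0 Hs ltac:(lra)).
    pose proof (Rabs_pos (vl j s 0)). pose proof (Rabs_pos (vu j s 0)).
    assert (Rabs (rl j s) <= Ml) by lra. assert (Rabs (ru j s) <= Mu) by lra.
    apply Rabs_def2b in H1. apply Rabs_def2b in H2.
    split. unfold Rminus. eapply Rle_trans. apply Rabs_triang. rewrite Rabs_Ropp. lra. lra. }
  destruct (Lip (- M) M) as [L HL].
  set (K := Rabs L + 8 * beta + 1). assert (EK : K = Rabs L + 8 * beta + 1) by reflexivity. clearbody K.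
  assert (HK : 0 < K) by (pose proof (Rabs_pos L); lra).
  assert (Main : forall eps, 0 < eps -> forall s, 0 <= s <= T -> forall j x, 0 <= x <= 1 ->
     0 < vu j s x - vl j s x + eps * exp (K * s) * aa alpha beta j /\
     0 < ru j s - rl j s + eps * exp (K * s) * bb j).
  { intros eps Heps.
    set (W := fun s j x => vu j s x - vl j s x + eps * exp (K * s) * aa alpha beta j).
    assert (EW : forall s j x, W s j x = vu j s x - vl j s x + eps * exp (K * s) * aa alpha beta j) by reflexivity.
    clearbody W.
    set (S := fun s j => ru j s - rl j s + eps * exp (K * s) * bb j).
    assert (ES : forall s j, S s j = ru j s - rl j s + eps * exp (K * s) * bb j) by reflexivity.
    clearbody S.
    intros s Hs j x Hx. rewrite <- EW, <- ES. revert j x Hx. revert s Hs.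
    assert (CW : forall j, cont2_on (fun s x => 0 <= s /\ 0 <= x <= 1) (fun s x => W s j x)).
    { intros j. apply (cont2_ext _ (fun s x => (vu j s x - vl j s x) + (eps * exp (K * s) * aa alpha beta j) * 1)).
      intros; rewrite EW; ring. apply cont2_plus. apply cont2_minus.
      apply (Regu j). apply (Regl j). apply cont2_sep. intros. eapply derive_cont_pt. auto_derive; auto.
      intros; apply continuity_pt_const. intros ? ?; auto. }
    assert (DS : forall j t, 0 <= t -> DW (fun s => 0 <= s) (fun s => S s j) t (du j t - dl j t + eps * K * exp (K * t) * bb j)).
    { intros j t Ht. apply (dw_ext _ (fun s => (ru j s - rl j s) + eps * exp (K * s) * bb j)).
      intros; rewrite ES; ring. apply dw_plus. apply dw_minus.
      apply dw_of_within. apply (Regu j). auto. apply dw_of_within. apply (Regl j). auto.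
      apply dw_of_derive. auto_derive; auto. ring. }
    apply (real_induction (fun s => forall j x, 0 <= x <= 1 -> 0 < W s j x /\ 0 < S s j) 0 T ltac:(lra)).
    - intros j x Hx. rewrite EW, ES. rewrite Rmult_0_r, exp_0.
      pose proof (aa_pos alpha beta j Hal Hbe). pose proof (bb_pos j).
      specialize (I0v j x Hx). specialize (I0r j). split; nra.
    -
      intros t Ht Hprev.
      set (C := M / eps + M * alpha / (eps * beta)).
      destruct (bb_large C) as [n Hn].
      destruct (fin_delta (fun j del => forall s, t <= s < t + del -> s <= T ->
          (forall x, 0 <= x <= 1 -> 0 < W s j x) /\ 0 < S s j)) with (n := n) as [del [Hdel Kdel]].
      { intros j dl0 dl' Hdl H s Hs1 Hs2. apply H; auto. lra. }
      { intros j.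
        destruct (persist (fun s x => W s j x) t T 0 1 ltac:(lra)) as [d1 [Hd1 K1]].
        { intros x Hx. apply (Hprev t ltac:(lra) j x Hx). }
        { intros x Hx eps' Heps'. destruct (CW j t x ltac:(split; lra) eps' Heps') as [e [He Ke]].
          exists e. split; [exact He|]. intros s y Hs1 Hs2 Hy Hyx. apply Ke. split; lra.
          rewrite Rabs_right; lra. auto. }
        assert (St : 0 < S t j) by (apply (Hprev t ltac:(lra) j 0); lra).
        destruct (dw_cont _ _ _ _ (DS j t ltac:(lra)) (S t j) St) as [d2 [Hd2 K2]].
        exists (Rmin d1 d2). split. apply Rmin_pos; auto.
        assert (Hm1 := Rmin_l d1 d2). assert (Hm2 := Rmin_r d1 d2).
        intros s Hs1 Hs2. split. intros x Hx. apply K1; auto; lra.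
        specialize (K2 s ltac:(lra) ltac:(rewrite Rabs_right; lra)). apply Rabs_def2 in K2. lra. }
      exists del. split; auto. intros s Hs1 Hs2 j x Hx.
      destruct (Z_le_gt_dec j (Z.of_nat n)) as [Hj1|Hj1].
      destruct (Z_le_gt_dec (- Z.of_nat n) j) as [Hj2|Hj2].
      + destruct (Kdel j ltac:(lia) s Hs1 Hs2) as [A B]. split; auto.
      + assert (Hb := Hn j ltac:(lia)).
        all: idtac.
        assert (Hexp : 1 <= exp (K * s)) by (rewrite <- exp_0; apply exp_le'; nra).
        assert (Hv := Bv s j x ltac:(lra) Hx). apply Rabs_def2b in Hv.
        destruct (Br s j ltac:(lra)) as [Hr _]. apply Rabs_def2b in Hr.
        pose proof (aa_ge alpha beta j Hal Hbe). pose proof (bb_pos j).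
        assert (C1 : M < eps * bb j). { apply lt_div_mul; auto. unfold C in Hb.
          assert (0 <= M * alpha / (eps * beta)). { apply Rmult_le_pos. nra. left; apply Rinv_0_lt_compat; nra. } lra. }
        assert (C2 : M < eps * (beta / alpha * bb j)).
        { apply lt_div_mul; auto. unfold C in Hb.
          assert (0 <= M / eps) by (apply Rmult_le_pos; [lra| left; apply Rinv_0_lt_compat; lra]).
          replace (M / eps) with (M * alpha / (eps * beta) * (beta / alpha)) in * by (field; lra).
          assert (HH : M * alpha / (eps * beta) < bb j) by lra.
          replace (beta / alpha * bb j) with (bb j * (beta / alpha)) by ring.
          replace (M * (/ eps)) with (M / eps) by reflexivity.
          replace (M / eps) with (M * alpha / (eps * beta) * (beta / alpha)) by (field; lra).
          apply Rmult_lt_compat_r. apply Rdiv_lt_0_compat; lra. exact HH. }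
        rewrite EW, ES. split.
        * assert (eps * aa alpha beta j <= eps * exp (K * s) * aa alpha beta j).
          { pose proof (aa_pos alpha beta j Hal Hbe).
            assert (0 < eps * aa alpha beta j) by (apply Rmult_lt_0_compat; lra).
            replace (eps * exp (K * s) * aa alpha beta j) with ((eps * aa alpha beta j) * exp (K * s)) by ring. nra. }
          assert (eps * (beta / alpha * bb j) <= eps * aa alpha beta j) by (apply Rmult_le_compat_l; lra). lra.
        * assert (eps * bb j <= eps * exp (K * s) * bb j).
          { assert (0 < eps * bb j) by (apply Rmult_lt_0_compat; lra).
            replace (eps * exp (K * s) * bb j) with ((eps * bb j) * exp (K * s)) by ring. nra. }
          lra.
      + assert (Hb := Hn j ltac:(lia)).
        assert (Hexp : 1 <= exp (K * s)) by (rewrite <- exp_0; apply exp_le'; nra).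
        assert (Hv := Bv s j x ltac:(lra) Hx). apply Rabs_def2b in Hv.
        destruct (Br s j ltac:(lra)) as [Hr _]. apply Rabs_def2b in Hr.
        pose proof (aa_ge alpha beta j Hal Hbe). pose proof (bb_pos j).
        assert (C1 : M < eps * bb j). { apply lt_div_mul; auto. unfold C in Hb.
          assert (0 <= M * alpha / (eps * beta)). { apply Rmult_le_pos. nra. left; apply Rinv_0_lt_compat; nra. } lra. }
        assert (C2 : M < eps * (beta / alpha * bb j)).
        { apply lt_div_mul; auto. unfold C in Hb.
          assert (0 <= M / eps) by (apply Rmult_le_pos; [lra| left; apply Rinv_0_lt_compat; lra]).
          assert (HH : M * alpha / (eps * beta) < bb j) by lra.
          replace (beta / alpha * bb j) with (bb j * (beta / alpha)) by ring.
          replace (M / eps) with (M * alpha / (eps * beta) * (beta / alpha)) by (field; lra).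
          apply Rmult_lt_compat_r. apply Rdiv_lt_0_compat; lra. exact HH. }
        rewrite EW, ES. split.
        * assert (eps * aa alpha beta j <= eps * exp (K * s) * aa alpha beta j).
          { pose proof (aa_pos alpha beta j Hal Hbe).
            assert (0 < eps * aa alpha beta j) by (apply Rmult_lt_0_compat; lra).
            replace (eps * exp (K * s) * aa alpha beta j) with ((eps * aa alpha beta j) * exp (K * s)) by ring. nra. }
          assert (eps * (beta / alpha * bb j) <= eps * aa alpha beta j) by (apply Rmult_le_compat_l; lra). lra.
        * assert (eps * bb j <= eps * exp (K * s) * bb j).
          { assert (0 < eps * bb j) by (apply Rmult_lt_0_compat; lra).
            replace (eps * exp (K * s) * bb j) with ((eps * bb j) * exp (K * s)) by ring. nra. }
          lra.
    -
      intros t Ht Hprev.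
      set (X := eps * exp (K * t)). assert (EX : X = eps * exp (K * t)) by reflexivity. clearbody X.
      assert (HX : 0 < X) by (rewrite EX; apply Rmult_lt_0_compat; [lra|apply exp_pos]).
      assert (HWt : forall j x, W t j x = vu j t x - vl j t x + X * aa alpha beta j) by (intros; rewrite EW, EX; ring).
      assert (HSt : forall j, S t j = ru j t - rl j t + X * bb j) by (intros; rewrite ES, EX; ring).
      assert (GeW : forall j x, 0 <= x <= 1 -> 0 <= W t j x).
      { intros j x Hx. destruct (Rle_lt_dec 0 (W t j x)) as [h|h]; auto. exfalso.
        destruct (CW j t x ltac:(split; lra) (- W t j x) ltac:(lra)) as [e [He Ke]].
        set (s := t - Rmin e t / 2).
        assert (Hm1 : Rmin e t <= e) by apply Rmin_l. assert (Hm2 : Rmin e t <= t) by apply Rmin_r.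
        assert (Hm3 : 0 < Rmin e t) by (apply Rmin_pos; lra).
        specialize (Ke s x ltac:(unfold s; split; lra) ltac:(unfold s; rewrite Rabs_left; lra)
                        ltac:(rewrite Rminus_eq_0, Rabs_R0; lra)).
        destruct (Hprev s ltac:(unfold s; lra) j x Hx) as [P _]. apply Rabs_def2 in Ke. lra. }
      assert (GeS : forall j, 0 <= S t j).
      { intros j. destruct (Rle_lt_dec 0 (S t j)) as [h|h]; auto. exfalso.
        destruct (dw_cont _ _ _ _ (DS j t ltac:(lra)) (- S t j) ltac:(lra)) as [e [He Ke]].
        set (s := t - Rmin e t / 2).
        assert (Hm1 : Rmin e t <= e) by apply Rmin_l. assert (Hm2 : Rmin e t <= t) by apply Rmin_r.
        assert (Hm3 : 0 < Rmin e t) by (apply Rmin_pos; lra).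
        specialize (Ke s ltac:(unfold s; lra) ltac:(unfold s; rewrite Rabs_left; lra)).
        destruct (Hprev s ltac:(unfold s; lra) j 0 ltac:(lra)) as [_ P]. apply Rabs_def2 in Ke. lra. }
      assert (Aeq : forall j, alpha * (X * aa alpha beta j) = beta * (X * bb j) + beta * (X * bb (j + 1))).
      { intros j. replace (alpha * (X * aa alpha beta j)) with (X * (alpha * aa alpha beta j)) by ring.
        rewrite aa_eq; auto. ring. }
      assert (Bpos : forall j, 0 < beta * (X * bb j)).
      { intros j. pose proof (bb_pos j). apply Rmult_lt_0_compat; auto. apply Rmult_lt_0_compat; lra. }
      assert (StrS : forall j, 0 < S t j).
      { intros j. destruct (Rlt_le_dec 0 (S t j)) as [h|h]; auto. exfalso.
        assert (Z : S t j = 0) by (specialize (GeS j); lra).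
        assert (Hle : du j t - dl j t + eps * K * exp (K * t) * bb j <= 0).
        { apply (dw_le _ _ _ _ 0 (DS j t ltac:(lra))). intros eta Heta.
          set (s := t - Rmin eta t / 2).
          assert (Hm1 : Rmin eta t <= eta) by apply Rmin_l. assert (Hm2 : Rmin eta t <= t) by apply Rmin_r.
          assert (Hm3 : 0 < Rmin eta t) by (apply Rmin_pos; lra).
          exists s. split. unfold s; lra. split. unfold s; lra. split. unfold s; rewrite Rabs_left; lra.
          apply quot_le_neg. unfold s; lra. rewrite Rmult_0_l, Z.
          destruct (Hprev s ltac:(unfold s; lra) j 0 ltac:(lra)) as [_ P]. lra. }
        destruct (Su t j ltac:(lra)) as [_ [Hsu _]]. destruct (Sl t j ltac:(lra)) as [_ [Hsl _]].
        assert (W0 := GeW j 0 ltac:(lra)). rewrite HWt in W0.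
        assert (W1 := GeW (j - 1)%Z 1 ltac:(lra)). rewrite HWt in W1.
        rewrite HSt in Z.
        destruct (Br t j ltac:(lra)) as [_ [Bu Bl]].
        assert (HLip := HL (ru j t) (rl j t) Bu Bl).
        replace (ru j t - rl j t) with (- (X * bb j)) in HLip by lra.
        rewrite Rabs_Ropp in HLip. rewrite (Rabs_right (X * bb j)) in HLip.
        2:{ pose proof (bb_pos j). apply Rle_ge, Rmult_le_pos; lra. }
        assert (LL : L * (X * bb j) <= Rabs L * (X * bb j)).
        { apply Rmult_le_compat_r. pose proof (bb_pos j). apply Rmult_le_pos; lra. apply Rle_abs. }
        apply Rabs_def2b in HLip.
        assert (A1 := Aeq j). assert (A2 := Aeq (j - 1)%Z). rewrite Z.sub_add in A2.
        assert (B1 : beta * (X * bb (j + 1)) <= 3 * (beta * (X * bb j))).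
        { pose proof (bb_succ j). assert (X * bb (j + 1) <= 3 * (X * bb j)) by nra. nra. }
        assert (B2 : beta * (X * bb (j - 1)) <= 3 * (beta * (X * bb j))).
        { pose proof (bb_pred j). assert (X * bb (j - 1) <= 3 * (X * bb j)) by nra. nra. }
        assert (KT : eps * K * exp (K * t) * bb j = Rabs L * (X * bb j) + 8 * (beta * (X * bb j)) + X * bb j).
        { rewrite EX, EK. ring. }
        assert (AW0 : alpha * (vu j t 0 - vl j t 0) >= - (alpha * (X * aa alpha beta j))).
        { apply Rle_ge. replace (- (alpha * (X * aa alpha beta j))) with (alpha * (- (X * aa alpha beta j))) by ring.
          apply Rmult_le_compat_l; lra. }
        assert (AW1 : alpha * (vu (j - 1)%Z t 1 - vl (j - 1)%Z t 1) >= - (alpha * (X * aa alpha beta (j - 1)))).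
        { apply Rle_ge. replace (- (alpha * (X * aa alpha beta (j - 1)))) with (alpha * (- (X * aa alpha beta (j - 1)))) by ring.
          apply Rmult_le_compat_l; lra. }
        assert (BS : 2 * beta * ru j t - 2 * beta * rl j t = - 2 * (beta * (X * bb j))).
        { replace (2 * beta * ru j t - 2 * beta * rl j t) with (2 * beta * (ru j t - rl j t)) by ring.
          replace (ru j t - rl j t) with (- (X * bb j)) by lra. ring. }
        assert (PX : 0 < X * bb j) by (pose proof (bb_pos j); nra).
        pose proof (Bpos j). lra. }
      assert (StrW : forall j x, 0 <= x <= 1 -> 0 < W t j x).
      { intros j x0 Hx0. destruct (Rlt_le_dec 0 (W t j x0)) as [h|h]; auto. exfalso.
        assert (Z : W t j x0 = 0) by (specialize (GeW j x0 Hx0); lra).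
        destruct (Su t j ltac:(lra)) as [Hsu0 [_ [Hsu1 Hsu2]]]. destruct (Sl t j ltac:(lra)) as [Hsl0 [_ [Hsl1 Hsl2]]].
        destruct (Regu j) as [_ [_ [_ [DtU [DxU [DxxU _]]]]]].
        destruct (Regl j) as [_ [_ [_ [DtL [DxL [DxxL _]]]]]].
        assert (DWx : forall y, 0 <= y <= 1 -> DW (fun y => 0 <= y <= 1) (fun y => W t j y) y
                   (vxu j t y - vxl j t y + 0)).
        { intros y Hy. apply (dw_ext _ (fun y => (vu j t y - vl j t y) + X * aa alpha beta j)).
          intros; rewrite HWt; ring. apply dw_plus. apply dw_minus.
          apply dw_of_within. apply DxU; lra. apply dw_of_within. apply DxL; lra.
          apply dw_of_derive. apply isd_const. }
        assert (A1 := Aeq j). pose proof (Bpos j). pose proof (Bpos (j + 1)%Z).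
        assert (Zw : forall y, vu j t y - vl j t y = - (X * aa alpha beta j) + W t j y) by (intros; rewrite HWt; ring).
        destruct (Req_dec x0 0) as [E0|E0]; [|destruct (Req_dec x0 1) as [E1|E1]].
        - subst x0.
          assert (Hge : 0 <= vxu j t 0 - vxl j t 0 + 0).
          { apply (dw_ge _ _ _ _ 0 (DWx 0 ltac:(lra))). intros eta Heta.
            set (y := Rmin eta 1 / 2).
            assert (Hm1 : Rmin eta 1 <= eta) by apply Rmin_l. assert (Hm2 : Rmin eta 1 <= 1) by apply Rmin_r.
            assert (Hm3 : 0 < Rmin eta 1) by (apply Rmin_pos; lra).
            exists y. split. unfold y; lra. split. unfold y; lra. split. unfold y. rewrite Rminus_0_r, Rabs_right; lra.
            apply quot_ge. unfold y; lra. rewrite Rmult_0_l, Z. assert (0 <= W t j y) by (apply GeW; unfold y; lra). lra. }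
          assert (Dl : 0 <= d * vxu j t 0 - d * vxl j t 0).
          { replace (d * vxu j t 0 - d * vxl j t 0) with (d * (vxu j t 0 - vxl j t 0)) by ring. apply Rmult_le_pos; lra. }
          assert (AZ : alpha * vu j t 0 - alpha * vl j t 0 = - (alpha * (X * aa alpha beta j))).
          { replace (alpha * vu j t 0 - alpha * vl j t 0) with (alpha * (vu j t 0 - vl j t 0)) by ring.
            rewrite Zw, Z. ring. }
          assert (GS := GeS j). rewrite HSt in GS.
          assert (BZ : beta * ru j t - beta * rl j t >= - (beta * (X * bb j))).
          { apply Rle_ge. replace (beta * ru j t - beta * rl j t) with (beta * (ru j t - rl j t)) by ring.
            replace (- (beta * (X * bb j))) with (beta * (- (X * bb j))) by ring. apply Rmult_le_compat_l; lra. }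
          lra.
        - subst x0.
          assert (Hle : vxu j t 1 - vxl j t 1 + 0 <= 0).
          { apply (dw_le _ _ _ _ 0 (DWx 1 ltac:(lra))). intros eta Heta.
            set (y := 1 - Rmin eta 1 / 2).
            assert (Hm1 : Rmin eta 1 <= eta) by apply Rmin_l. assert (Hm2 : Rmin eta 1 <= 1) by apply Rmin_r.
            assert (Hm3 : 0 < Rmin eta 1) by (apply Rmin_pos; lra).
            exists y. split. unfold y; lra. split. unfold y; lra. split. unfold y. rewrite Rabs_left; lra.
            apply quot_le_neg. unfold y; lra. rewrite Rmult_0_l, Z. assert (0 <= W t j y) by (apply GeW; unfold y; lra). lra. }
          assert (Dl : d * vxu j t 1 - d * vxl j t 1 <= 0).
          { replace (d * vxu j t 1 - d * vxl j t 1) with (d * (vxu j t 1 - vxl j t 1)) by ring.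
            assert (0 <= d * - (vxu j t 1 - vxl j t 1)) by (apply Rmult_le_pos; lra). lra. }
          assert (AZ : alpha * vu j t 1 - alpha * vl j t 1 = - (alpha * (X * aa alpha beta j))).
          { replace (alpha * vu j t 1 - alpha * vl j t 1) with (alpha * (vu j t 1 - vl j t 1)) by ring.
            rewrite Zw, Z. ring. }
          assert (GS := GeS (j + 1)%Z). rewrite HSt in GS.
          assert (BZ : beta * ru (j + 1)%Z t - beta * rl (j + 1)%Z t >= - (beta * (X * bb (j + 1)))).
          { apply Rle_ge. replace (beta * ru (j + 1)%Z t - beta * rl (j + 1)%Z t) with (beta * (ru (j + 1)%Z t - rl (j + 1)%Z t)) by ring.
            replace (- (beta * (X * bb (j + 1)))) with (beta * (- (X * bb (j + 1)))) by ring. apply Rmult_le_compat_l; lra. }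
          lra.
        - assert (Hx0' : 0 < x0 < 1) by (destruct Hx0 as [[a1|a1] [a2|a2]]; subst; try tauto; lra).
          assert (DT : is_derive (fun s => W s j x0) t (vtu j t x0 - vtl j t x0 + eps * K * exp (K * t) * aa alpha beta j)).
          { apply (isd_ext (fun s => (vu j s x0 - vl j s x0) + eps * exp (K * s) * aa alpha beta j) _ _
                     ((vtu j t x0 - vtl j t x0) + eps * K * exp (K * t) * aa alpha beta j)).
            intros; rewrite EW; ring. ring.
            apply isd_plus. apply isd_minus. apply DtU; lra. apply DtL; lra. auto_derive; auto; ring. }
          assert (Tle : vtu j t x0 - vtl j t x0 + eps * K * exp (K * t) * aa alpha beta j <= 0).
          { apply (dw_le (fun _ => True) _ _ _ 0 (dw_of_derive _ _ _ _ DT)). intros eta Heta.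
            set (s := t - Rmin eta t / 2).
            assert (Hm1 : Rmin eta t <= eta) by apply Rmin_l. assert (Hm2 : Rmin eta t <= t) by apply Rmin_r.
            assert (Hm3 : 0 < Rmin eta t) by (apply Rmin_pos; lra).
            exists s. split; [exact I|]. split. unfold s; lra. split. unfold s; rewrite Rabs_left; lra.
            apply quot_le_neg. unfold s; lra. rewrite Rmult_0_l, Z.
            destruct (Hprev s ltac:(unfold s; lra) j x0 ltac:(lra)) as [P _]. lra. }
          set (r := Rmin x0 (1 - x0)).
          assert (Hr1 : r <= x0) by apply Rmin_l. assert (Hr2 : r <= 1 - x0) by apply Rmin_r.
          assert (Hr : 0 < r) by (apply Rmin_pos; lra).
          assert (Xge : 0 <= vxxu j t x0 - vxxl j t x0).
          { apply (interior_min (fun y => W t j y) (fun y => vxu j t y - vxl j t y) x0 _ r Hr).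
            - intros y Hy. apply Rabs_def2 in Hy.
              apply (isd_ext (fun y => W t j y) _ _ (vxu j t y - vxl j t y + 0)). intros; auto. ring.
              apply (derive_of_dw (fun y => 0 <= y <= 1) _ _ _ (Rmin y (1 - y))).
              apply Rmin_pos; lra.
              intros z Hz. assert (Rmin y (1 - y) <= y) by apply Rmin_l. assert (Rmin y (1 - y) <= 1 - y) by apply Rmin_r.
              apply Rabs_def2 in Hz. lra.
              apply DWx. lra.
            - apply isd_minus. apply DxxU; lra. apply DxxL; lra.
            - intros y Hy. apply Rabs_def2 in Hy. rewrite Z. apply GeW. lra. }
          specialize (Hsu0 x0 Hx0'). specialize (Hsl0 x0 Hx0').
          assert (0 <= d * (vxxu j t x0 - vxxl j t x0)) by (apply Rmult_le_pos; lra).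
          assert (0 < eps * K * exp (K * t) * aa alpha beta j).
          { pose proof (aa_pos alpha beta j Hal Hbe). pose proof (exp_pos (K * t)).
            apply Rmult_lt_0_compat; [|lra]. apply Rmult_lt_0_compat; [|lra]. apply Rmult_lt_0_compat; lra. }
          lra. }
      intros j x Hx. split; auto.
  }
  intros j x Hx.
  assert (HE : 0 < exp (K * T)) by apply exp_pos.
  pose proof (aa_pos alpha beta j Hal Hbe) as Ha. pose proof (bb_pos j) as Hb.
  split.
  - destruct (Rle_lt_dec (vl j T x) (vu j T x)) as [h|h]; auto. exfalso.
    set (eps := (vl j T x - vu j T x) / (exp (K * T) * aa alpha beta j)).
    assert (Heps : 0 < eps) by (unfold eps; apply Rdiv_lt_0_compat; [lra| apply Rmult_lt_0_compat; lra]).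
    destruct (Main eps Heps T ltac:(lra) j x Hx) as [P _].
    assert (eps * exp (K * T) * aa alpha beta j = vl j T x - vu j T x) by (unfold eps; field; lra).
    lra.
  - destruct (Rle_lt_dec (rl j T) (ru j T)) as [h|h]; auto. exfalso.
    set (eps := (rl j T - ru j T) / (exp (K * T) * bb j)).
    assert (Heps : 0 < eps) by (unfold eps; apply Rdiv_lt_0_compat; [lra| apply Rmult_lt_0_compat; lra]).
    destruct (Main eps Heps T ltac:(lra) j x Hx) as [_ P].
    assert (eps * exp (K * T) * bb j = rl j T - ru j T) by (unfold eps; field; lra).
    lra.
Qed.

Theorem proposition2p2 (alpha beta d : R) (f : R -> R)
  (vl : Z -> R -> R -> R) (rl : Z -> R -> R)
  (vu : Z -> R -> R -> R) (ru : Z -> R -> R) :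
  0 < alpha -> 0 < beta -> 0 < d -> KPP_f f ->
  subsolution alpha beta d f vl rl -> supersolution alpha beta d f vu ru ->
  locally_bounded_in_time vl rl -> locally_bounded_in_time vu ru ->
  (forall (j : Z) x, 0 <= x <= 1 -> vl j 0 x <= vu j 0 x) ->
  (forall j : Z, rl j 0 <= ru j 0) ->
  (forall t x (j : Z), 0 < t -> 0 <= x <= 1 -> vl j t x <= vu j t x /\ rl j t <= ru j t) /\
  ((exists (j : Z) x, 0 <= x <= 1 /\ vl j 0 x <> vu j 0 x) \/
   (exists j : Z, rl j 0 <> ru j 0) ->
   forall t x (j : Z), 0 < t -> 0 <= x <= 1 -> vl j t x < vu j t x /\ rl j t < ru j t).
Proof.
  intros Hal Hbe Hd HKPP Hsub Hsup LBl LBu I0v I0r.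
  destruct HKPP as [_ [_ [_ [Lip _]]]].
  destruct Hsub as [dl [vtl [vxl [vxxl [Regl Sl]]]]].
  destruct Hsup as [du [vtu [vxu [vxxu [Regu Su]]]]].
  assert (Wk : forall t x (j : Z), 0 < t -> 0 <= x <= 1 -> vl j t x <= vu j t x /\ rl j t <= ru j t).
  { intros t x j Ht Hx. apply (weak_comp alpha beta d f vl rl dl vtl vxl vxxl vu ru du vtu vxu vxxu t); auto. }
  split; [exact Wk|].
  assert (Gw : forall t x j, 0 <= t -> 0 <= x <= 1 -> 0 <= vu j t x - vl j t x).
  { intros t x j Ht Hx. destruct Ht as [Ht|Ht]. specialize (Wk t x j Ht Hx). lra. subst. specialize (I0v j x Hx). lra. }
  assert (Gr : forall t j, 0 <= t -> 0 <= ru j t - rl j t).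
  { intros t j Ht. destruct Ht as [Ht|Ht]. specialize (Wk t 0 j Ht ltac:(lra)). lra. subst. specialize (I0r j). lra. }
  assert (DX : forall j t x, 0 < t -> 0 <= x <= 1 ->
            DW (fun y => 0 <= y <= 1) (fun y => vu j t y - vl j t y) x (vxu j t x - vxl j t x)).
  { intros j t x Ht Hx. apply dw_minus; apply dw_of_within; [apply (Regu j)|apply (Regl j)]; auto. }
  assert (DR : forall j t, 0 <= t -> DW (fun s => 0 <= s) (fun s => ru j s - rl j s) t (du j t - dl j t)).
  { intros j t Ht. apply dw_minus; apply dw_of_within; [apply (Regu j)|apply (Regl j)]; auto. }
  assert (L0 : forall j t, 0 < t -> vu j t 0 - vl j t 0 = 0 -> 0 <= vxu j t 0 - vxl j t 0).
  { intros j t Ht Z. apply (dw_ge _ _ _ _ 0 (DX j t 0 Ht ltac:(lra))). intros eta Heta.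
    set (y := Rmin eta 1 / 2).
    assert (Hm1 : Rmin eta 1 <= eta) by apply Rmin_l. assert (Hm2 : Rmin eta 1 <= 1) by apply Rmin_r.
    assert (Hm3 : 0 < Rmin eta 1) by (apply Rmin_pos; lra).
    exists y. split. unfold y; lra. split. unfold y; lra. split. unfold y. rewrite Rminus_0_r, Rabs_right; lra.
    apply quot_ge. unfold y; lra. rewrite Rmult_0_l, Z. assert (0 <= vu j t y - vl j t y) by (apply Gw; unfold y; lra). lra. }
  assert (L1 : forall j t, 0 < t -> vu j t 1 - vl j t 1 = 0 -> vxu j t 1 - vxl j t 1 <= 0).
  { intros j t Ht Z. apply (dw_le _ _ _ _ 0 (DX j t 1 Ht ltac:(lra))). intros eta Heta.
    set (y := 1 - Rmin eta 1 / 2).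
    assert (Hm1 : Rmin eta 1 <= eta) by apply Rmin_l. assert (Hm2 : Rmin eta 1 <= 1) by apply Rmin_r.
    assert (Hm3 : 0 < Rmin eta 1) by (apply Rmin_pos; lra).
    exists y. split. unfold y; lra. split. unfold y; lra. split. unfold y. rewrite Rabs_left; lra.
    apply quot_le_neg. unfold y; lra. rewrite Rmult_0_l, Z. assert (0 <= vu j t y - vl j t y) by (apply Gw; unfold y; lra). lra. }
  assert (ES : forall j, EdgeSup d (fun t x => vu j t x - vl j t x) (fun t x => vtu j t x - vtl j t x)
                 (fun t x => vxu j t x - vxl j t x) (fun t x => vxxu j t x - vxxl j t x)).
  { intros j. split; [|split; [|split; [|split]]].
    - apply cont2_minus; [apply (Regu j)|apply (Regl j)].
    - intros t x Ht Hx. split; [|split; [|split]].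
      + apply isd_minus; [apply (Regu j)|apply (Regl j)]; auto.
      + apply (derive_of_dw (fun y => 0 <= y <= 1) _ _ _ (Rmin x (1 - x))). apply Rmin_pos; lra.
        intros z Hz. assert (Rmin x (1 - x) <= x) by apply Rmin_l. assert (Rmin x (1 - x) <= 1 - x) by apply Rmin_r.
        apply Rabs_def2 in Hz. lra. apply DX; lra.
      + apply isd_minus; [apply (Regu j)|apply (Regl j)]; auto.
      + destruct (Su t j Ht) as [A _]. destruct (Sl t j Ht) as [B _].
        specialize (A x Hx). specialize (B x Hx). lra.
    - intros t x Ht Hx. apply Gw; auto.
    - intros t Ht Z k r Hk Hr N.
      assert (Ge : k <= vxu j t 0 - vxl j t 0).
      { apply (dw_ge _ _ _ _ k (DX j t 0 Ht ltac:(lra))). intros eta Heta.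
        set (m := Rmin eta (Rmin r 1)).
        assert (Hm1 : m <= eta) by apply Rmin_l.
        assert (Hm2 : m <= r) by (unfold m; pose proof (Rmin_r eta (Rmin r 1)); pose proof (Rmin_l r 1); lra).
        assert (Hm4 : m <= 1) by (unfold m; pose proof (Rmin_r eta (Rmin r 1)); pose proof (Rmin_r r 1); lra).
        assert (Hm3 : 0 < m) by (unfold m; repeat apply Rmin_pos; lra).
        exists (m / 2). split. lra. split. lra. split. rewrite Rminus_0_r, Rabs_right; lra.
        apply quot_ge. lra. rewrite Z, Rminus_0_r, Rminus_0_r. apply N. lra. }
      destruct (Su t j Ht) as [_ [_ [A _]]]. destruct (Sl t j Ht) as [_ [_ [B _]]].
      assert (G := Gr t j ltac:(lra)).
      assert (0 <= beta * (ru j t - rl j t)) by (apply Rmult_le_pos; lra).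
      assert (0 < d * (vxu j t 0 - vxl j t 0)) by (apply Rmult_lt_0_compat; lra).
      assert (alpha * vu j t 0 - alpha * vl j t 0 = 0) by (replace (alpha * vu j t 0 - alpha * vl j t 0) with (alpha * (vu j t 0 - vl j t 0)) by ring; rewrite Z; ring).
      lra.
    - intros t Ht Z k r Hk Hr N.
      assert (Le : vxu j t 1 - vxl j t 1 <= - k).
      { apply (dw_le _ _ _ _ (- k) (DX j t 1 Ht ltac:(lra))). intros eta Heta.
        set (m := Rmin eta (Rmin r 1)).
        assert (Hm1 : m <= eta) by apply Rmin_l.
        assert (Hm2 : m <= r) by (unfold m; pose proof (Rmin_r eta (Rmin r 1)); pose proof (Rmin_l r 1); lra).
        assert (Hm4 : m <= 1) by (unfold m; pose proof (Rmin_r eta (Rmin r 1)); pose proof (Rmin_r r 1); lra).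
        assert (Hm3 : 0 < m) by (unfold m; repeat apply Rmin_pos; lra).
        exists (1 - m / 2). split. lra. split. lra. split. rewrite Rabs_left; lra.
        apply quot_le_neg. lra. rewrite Z, Rminus_0_r.
        assert (k * (m / 2) <= vu j t (1 - m / 2) - vl j t (1 - m / 2)) by (apply N; lra). lra. }
      destruct (Su t j Ht) as [_ [_ [_ A]]]. destruct (Sl t j Ht) as [_ [_ [_ B]]].
      assert (G := Gr t (j + 1)%Z ltac:(lra)).
      assert (0 <= beta * (ru (j + 1)%Z t - rl (j + 1)%Z t)) by (apply Rmult_le_pos; lra).
      assert (d * (vxu j t 1 - vxl j t 1) < 0).
      { assert (0 < d * - (vxu j t 1 - vxl j t 1)) by (apply Rmult_lt_0_compat; lra). lra. }
      assert (alpha * vu j t 1 - alpha * vl j t 1 = 0) by (replace (alpha * vu j t 1 - alpha * vl j t 1) with (alpha * (vu j t 1 - vl j t 1)) by ring; rewrite Z; ring).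
      lra. }
  assert (EN : forall j t, 0 < t -> 0 < ru j t - rl j t ->
                 0 < vu j t 0 - vl j t 0 /\ 0 < vu (j - 1)%Z t 1 - vl (j - 1)%Z t 1).
  { intros j t Ht Hs. split.
    - destruct (Rlt_le_dec 0 (vu j t 0 - vl j t 0)) as [h|h]; auto. exfalso.
      assert (Z : vu j t 0 - vl j t 0 = 0) by (specialize (Gw t 0 j ltac:(lra) ltac:(lra)); lra).
      assert (G := L0 j t Ht Z).
      destruct (Su t j Ht) as [_ [_ [A _]]]. destruct (Sl t j Ht) as [_ [_ [B _]]].
      assert (0 < beta * (ru j t - rl j t)) by (apply Rmult_lt_0_compat; lra).
      assert (0 <= d * (vxu j t 0 - vxl j t 0)) by (apply Rmult_le_pos; lra).
      assert (alpha * vu j t 0 - alpha * vl j t 0 = 0) by (replace (alpha * vu j t 0 - alpha * vl j t 0) with (alpha * (vu j t 0 - vl j t 0)) by ring; rewrite Z; ring).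
      lra.
    - destruct (Rlt_le_dec 0 (vu (j - 1)%Z t 1 - vl (j - 1)%Z t 1)) as [h|h]; auto. exfalso.
      assert (Z : vu (j - 1)%Z t 1 - vl (j - 1)%Z t 1 = 0) by (specialize (Gw t 1 (j - 1)%Z ltac:(lra) ltac:(lra)); lra).
      assert (G := L1 (j - 1)%Z t Ht Z).
      destruct (Su t (j - 1)%Z Ht) as [_ [_ [_ A]]]. destruct (Sl t (j - 1)%Z Ht) as [_ [_ [_ B]]].
      rewrite Z.sub_add in A, B.
      assert (0 < beta * (ru j t - rl j t)) by (apply Rmult_lt_0_compat; lra).
      assert (d * (vxu (j - 1)%Z t 1 - vxl (j - 1)%Z t 1) <= 0).
      { assert (0 <= d * - (vxu (j - 1)%Z t 1 - vxl (j - 1)%Z t 1)) by (apply Rmult_le_pos; lra). lra. }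
      assert (alpha * vu (j - 1)%Z t 1 - alpha * vl (j - 1)%Z t 1 = 0) by (replace (alpha * vu (j - 1)%Z t 1 - alpha * vl (j - 1)%Z t 1) with (alpha * (vu (j - 1)%Z t 1 - vl (j - 1)%Z t 1)) by ring; rewrite Z; ring).
      lra. }
  assert (NE : forall j t, 0 < t -> (0 < vu j t 0 - vl j t 0 \/ 0 < vu (j - 1)%Z t 1 - vl (j - 1)%Z t 1) ->
                 0 < ru j t - rl j t).
  { intros j t Ht Hw. destruct (Rlt_le_dec 0 (ru j t - rl j t)) as [h|h]; auto. exfalso.
    assert (Z : ru j t - rl j t = 0) by (specialize (Gr t j ltac:(lra)); lra).
    assert (Le : du j t - dl j t <= 0).
    { apply (dw_le _ _ _ _ 0 (DR j t ltac:(lra))). intros eta Heta.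
      set (s := t - Rmin eta t / 2).
      assert (Hm1 : Rmin eta t <= eta) by apply Rmin_l. assert (Hm2 : Rmin eta t <= t) by apply Rmin_r.
      assert (Hm3 : 0 < Rmin eta t) by (apply Rmin_pos; lra).
      exists s. split. unfold s; lra. split. unfold s; lra. split. unfold s; rewrite Rabs_left; lra.
      apply quot_le_neg. unfold s; lra. rewrite Rmult_0_l, Z. assert (0 <= ru j s - rl j s) by (apply Gr; unfold s; lra). lra. }
    destruct (Su t j Ht) as [_ [A _]]. destruct (Sl t j Ht) as [_ [B _]].
    assert (E : ru j t = rl j t) by lra. rewrite E in A.
    assert (G0 := Gw t 0 j ltac:(lra) ltac:(lra)). assert (G1 := Gw t 1 (j - 1)%Z ltac:(lra) ltac:(lra)).
    assert (0 < alpha * ((vu j t 0 - vl j t 0) + (vu (j - 1)%Z t 1 - vl (j - 1)%Z t 1))).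
    { apply Rmult_lt_0_compat; auto. destruct Hw; lra. }
    lra. }
  set (PosE := fun j => forall t x, 0 < t -> 0 <= x <= 1 -> 0 < vu j t x - vl j t x).
  assert (FromSome : forall j, (forall t, 0 < t -> exists x, 0 <= x <= 1 /\ 0 < vu j t x - vl j t x) -> PosE j).
  { intros j H t x Ht Hx. apply (edge_pos d _ _ _ _ t Hd (ES j) Ht (H t Ht) x Hx). }
  assert (Up : forall j, PosE j -> PosE (j + 1)%Z).
  { intros j P. apply FromSome. intros t Ht. exists 0. split. lra.
    assert (H1 := P t 1 Ht ltac:(lra)).
    assert (H2 := NE (j + 1)%Z t Ht). replace (j + 1 - 1)%Z with j in H2 by lia.
    specialize (H2 (or_intror H1)). apply (EN (j + 1)%Z t Ht H2). }
  assert (Down : forall j, PosE j -> PosE (j - 1)%Z).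
  { intros j P. apply FromSome. intros t Ht. exists 1. split. lra.
    assert (H1 := P t 0 Ht ltac:(lra)).
    assert (H2 := NE j t Ht (or_introl H1)). apply (EN j t Ht H2). }
  intros Hinit.
  assert (Start : exists j0, PosE j0).
  { destruct Hinit as [[j [x [Hx Hne]]]|[j Hne]].
    - exists j. apply FromSome. intros t Ht.
      assert (P0 : 0 < vu j 0 x - vl j 0 x) by (specialize (I0v j x Hx); destruct I0v; [lra|]; exfalso; apply Hne; auto).
      apply (vert_prop d _ _ _ _ 0 x Hd (ES j) ltac:(lra) Hx P0 t Ht).
    - exists j. apply FromSome. intros t Ht.
      assert (P0 : 0 < ru j 0 - rl j 0) by (specialize (I0r j); destruct I0r; [lra|]; exfalso; apply Hne; auto).
      destruct (dw_cont _ _ _ _ (DR j 0 ltac:(lra)) (ru j 0 - rl j 0) P0) as [del [Hdel K]].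
      set (t1 := Rmin t del / 2).
      assert (Hm1 : Rmin t del <= t) by apply Rmin_l. assert (Hm2 : Rmin t del <= del) by apply Rmin_r.
      assert (Hm3 : 0 < Rmin t del) by (apply Rmin_pos; lra).
      specialize (K t1 ltac:(unfold t1; lra) ltac:(unfold t1; rewrite Rminus_0_r, Rabs_right; lra)).
      apply Rabs_def2 in K.
      destruct (EN j t1 ltac:(unfold t1; lra) ltac:(lra)) as [W0 _].
      apply (vert_prop d _ _ _ _ t1 0 Hd (ES j) ltac:(unfold t1; lra) ltac:(lra) W0 t ltac:(unfold t1; lra)). }
  destruct Start as [j0 P0].
  assert (All : forall n : nat, PosE (j0 + Z.of_nat n)%Z /\ PosE (j0 - Z.of_nat n)%Z).
  { induction n as [|n [IH1 IH2]].
    - simpl. rewrite Z.add_0_r, Z.sub_0_r. auto.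
    - rewrite Nat2Z.inj_succ. split.
      + replace (j0 + Z.succ (Z.of_nat n))%Z with (j0 + Z.of_nat n + 1)%Z by lia. apply Up; auto.
      + replace (j0 - Z.succ (Z.of_nat n))%Z with (j0 - Z.of_nat n - 1)%Z by lia. apply Down; auto. }
  assert (AllJ : forall j, PosE j).
  { intros j. destruct (Z_le_gt_dec j0 j).
    - destruct (All (Z.to_nat (j - j0))) as [A _]. replace (j0 + Z.of_nat (Z.to_nat (j - j0)))%Z with j in A by lia. auto.
    - destruct (All (Z.to_nat (j0 - j))) as [_ A]. replace (j0 - Z.of_nat (Z.to_nat (j0 - j)))%Z with j in A by lia. auto. }
  intros t x j Ht Hx. split.
  - specialize (AllJ j t x Ht Hx). lra.
  - assert (H := NE j t Ht (or_introl (AllJ j t 0 Ht ltac:(lra)))). lra.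
Qed.
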